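(* Let $p,g_i,S,d,R,\eta_i,\beta$ be as in the context and let $h$ be the form defined there in the variables $z=(z_1,\dots,z_{n+m+3})=(x_1,\dots,x_n,s_0,\dots,s_{m+1},y)$. Then $p(x)>0$ for all $x\in S$ if and only if there exists a positive integer $r$ such that the polynomial in $(v,w)\in\mathbb{R}^{2(n+m+3)}$ $$\Big(h(v^2-w^2)-\tfrac1r\Big(\sum_{i=1}^{n+m+3}(v_i^2-w_i^2)^2\Big)^{2d}+\tfrac{1}{2r}\Big(\sum_{i=1}^{n+m+3}(v_i^4+w_i^4)\Big)^{2d}\Big)\cdot\Big(\sum_{i=1}^{n+m+3}v_i^2+\sum_{i=1}^{n+m+3}w_i^2\Big)^{r^2}$$ has nonnegative coefficients.
   Context: Let $p,g_1,\dots,g_m$ be real polynomials in $x=(x_1,\dots,x_n)$ and let $S=\{x\in\mathbb{R}^n : g_i(x)\ge 0,\ i=1,\dots,m\}$. Let $d\ge 1$ be the integer such that $2d$ is the smallest even integer larger than or equal to the maximum of the degrees of $p,g_1,\dots,g_m$. Assume there is $R>0$ with $\sum_{i=1}^n x_i^2\le R$ for all $x\in S$. Let $\eta_1,\dots,\eta_m$ be real numbers with $g_i(x)\le\eta_i$ for all $x\in S$, and let $\beta$ be a real number with $-p(x)\le\beta$ for all $x\in S$. For a polynomial $q$ in $x$ of degree at most $2d$, $y^{2d}q(x/y)$ denotes its homogenization to a form of degree $2d$ in $(x,y)$. Define $$h(x,s,y)=\big(y^{2d}p(x/y)+s_0^2y^{2d-2}\big)^2+\sum_{i=1}^m\big(y^{2d}g_i(x/y)-s_i^2y^{2d-2}\big)^2+\Big(\big(R+\textstyle\sum_{i=1}^m\eta_i+\beta\big)^d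 y^{2d}-\big(\sum_{i=1}^n x_i^2+\sum_{i=0}^m s_i^2\big)^d-s_{m+1}^{2d}\Big)^2,$$ a form of degree $4d$. $h(v^2-w^2)$ denotes $h$ evaluated at $z_i=v_i^2-w_i^2$, $i=1,\dots,n+m+3$. (The exponent $2d$ on the two added terms makes all terms homogeneous of degree $8d$; the paper's printed exponent $d$ is a typo.) *)

(* Defs.v *)
(* No multivariate polynomial library is installed, so we encode real
   polynomials in k variables x_0,...,x_{k-1} as formal finite sums of terms
   c * x^a, given as a list of pairs (c, a) with a : nat -> nat an exponent
   vector (only the entries a 0, ..., a (k-1) are meaningful).  Two lists
   denote the same polynomial iff they have the same coefficient function
   [coef k]; all notions below (coefficients, evaluation, total degree,
   homogenization, ring operations, substitution) respect this. *)
From Stdlib Require Import Reals List Arith.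
Import ListNotations.
Open Scope R_scope.

Definition mono := nat -> nat.
Definition mpoly := list (R * mono).

Definition mon_eqb (k : nat) (a b : mono) : bool :=
  forallb (fun i => Nat.eqb (a i) (b i)) (seq 0 k).
Definition mdeg (k : nat) (a : mono) : nat :=
  fold_right Nat.add 0%nat (map a (seq 0 k)).
Definition rsum (k : nat) (f : nat -> R) : R := fold_right Rplus 0 (map f (seq 0 k)).
Definition rprod (k : nat) (f : nat -> R) : R := fold_right Rmult 1 (map f (seq 0 k)).

Definition coef (k : nat) (P : mpoly) (a : mono) : R :=
  fold_right Rplus 0 (map fst (filter (fun t => mon_eqb k (snd t) a) P)).
Definition has_nonneg_coefs (k : nat) (P : mpoly) : Prop :=
  forall a : mono, 0 <= coef k P a.
Definition peval (k : nat) (P : mpoly) (x : nat -> R) : R :=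
  fold_right Rplus 0 (map (fun t => fst t * rprod k (fun i => x i ^ snd t i)) P).
(* total degree (0 for the zero polynomial) *)
Definition pdeg (k : nat) (P : mpoly) : nat :=
  fold_right Nat.max 0%nat
    (map (fun t => if Req_EM_T (coef k P (snd t)) 0 then 0%nat else mdeg k (snd t)) P).

Definition pconst (c : R) : mpoly := [(c, fun _ => 0%nat)].
Definition pvar (i : nat) : mpoly := [(1, fun j => if Nat.eqb j i then 1%nat else 0%nat)].
Definition padd (P Q : mpoly) : mpoly := P ++ Q.
Definition pscale (c : R) (P : mpoly) : mpoly := map (fun t => (c * fst t, snd t)) P.
Definition psub (P Q : mpoly) : mpoly := padd P (pscale (-1) Q).
Definition pmul (P Q : mpoly) : mpoly :=
  flat_map (fun t => map (fun u => (fst t * fst u, fun i => (snd t i + snd u i)%nat)) Q) P.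
Definition ppow (P : mpoly) (e : nat) : mpoly := Nat.iter e (pmul P) (pconst 1).
Definition psum (k : nat) (f : nat -> mpoly) : mpoly := flat_map f (seq 0 k).
Definition psubst (k : nat) (P : mpoly) (q : nat -> mpoly) : mpoly :=
  flat_map (fun t => pscale (fst t)
     (fold_right pmul (pconst 1) (map (fun i => ppow (q i) (snd t i)) (seq 0 k)))) P.
(* homogenization y^D q(x/y) of q in n variables x_0..x_{n-1} (deg q <= D),
   with the new variable y placed at index yi >= n *)
Definition homog (n yi D : nat) (P : mpoly) : mpoly :=
  map (fun t => (fst t, fun i => if Nat.ltb i n then snd t i
                                 else if Nat.eqb i yi then (D - mdeg n (snd t))%nat
                                 else 0%nat)) P.

(* Data: p, g_0, ..., g_{m-1} polynomials in x_0..x_{n-1}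
   (the paper's g_1..g_m are g 0 .. g (m-1), and eta_i is eta (i-1)). *)
Definition inS (n m : nat) (g : nat -> mpoly) (x : nat -> R) : Prop :=
  forall j, (j < m)%nat -> 0 <= peval n (g j) x.

(* d >= 1 with 2d the smallest even integer >= max degree *)
Definition maxdeg (n m : nat) (p : mpoly) (g : nat -> mpoly) : nat :=
  fold_right Nat.max (pdeg n p) (map (fun j => pdeg n (g j)) (seq 0 m)).
Definition dd (n m : nat) (p : mpoly) (g : nat -> mpoly) : nat :=
  Nat.max 1 ((maxdeg n m p g + 1) / 2).

(* The form h in z = (x_0..x_{n-1}, s_0..s_{m+1}, y), N = n+m+3 variables:
   x_i at index i, s_j at index n+j, y at index n+m+2. *)
Definition hform (n m : nat) (p : mpoly) (g : nat -> mpoly)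
    (Rb : R) (eta : nat -> R) (beta : R) : mpoly :=
  let d := dd n m p g in
  let yi := (n + m + 2)%nat in
  let y := pvar yi in
  let s j := pvar (n + j) in
  let t0 := ppow (padd (homog n yi (2 * d) p)
                       (pmul (ppow (s 0%nat) 2) (ppow y (2 * d - 2)))) 2 in
  let tg := psum m (fun j => ppow (psub (homog n yi (2 * d) (g j))
                       (pmul (ppow (s (S j)) 2) (ppow y (2 * d - 2)))) 2) in
  let c := Rb + rsum m eta + beta in
  let tl := ppow (psub (psub (pscale (c ^ d) (ppow y (2 * d)))
                   (ppow (padd (psum n (fun i => ppow (pvar i) 2))
                               (psum (S m) (fun j => ppow (s j) 2))) d))
                   (ppow (s (S m)) (2 * d))) 2 in
  padd t0 (padd tg tl).

(* The polynomial in (v, w) (2N variables: v_i at index i, w_i at index N+i)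
   ( h(v^2-w^2) - 1/r (sum (v_i^2-w_i^2)^2)^{2d} + 1/(2r) (sum (v_i^4+w_i^4))^{2d} )
     * (sum v_i^2 + sum w_i^2)^{r^2} *)
Definition cert (n m : nat) (p : mpoly) (g : nat -> mpoly)
    (Rb : R) (eta : nat -> R) (beta : R) (r : nat) : mpoly :=
  let d := dd n m p g in
  let N := (n + m + 3)%nat in
  let q i := psub (ppow (pvar i) 2) (ppow (pvar (N + i)) 2) in
  let hq := psubst N (hform n m p g Rb eta beta) q in
  let A := ppow (psum N (fun i => ppow (q i) 2)) (2 * d) in
  let B := ppow (psum N (fun i => padd (ppow (pvar i) 4) (ppow (pvar (N + i)) 4))) (2 * d) in
  let E := ppow (padd (psum N (fun i => ppow (pvar i) 2))
                      (psum N (fun i => ppow (pvar (N + i)) 2))) (r * r) in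
  pmul (padd (psub hq (pscale (/ INR r) A)) (pscale (/ (2 * INR r)) B)) E.

(* Main.v *)
Require Import Defs.
From Stdlib Require Import Reals List Arith Lia Lra Psatz Classical ClassicalEpsilon FunctionalExtensionality.
Import ListNotations.
Open Scope R_scope.

Definition L (f : mono -> R) (P : mpoly) : R :=
  fold_right Rplus 0 (map (fun t => fst t * f (snd t)) P).
Definition meq (k : nat) (a b : mono) : Prop := forall i, (i < k)%nat -> a i = b i.
Definition resp (k : nat) (f : mono -> R) : Prop := forall a b, meq k a b -> f a = f b.

Lemma mon_eqb_spec k a b : mon_eqb k a b = true <-> meq k a b.
Proof.
  unfold mon_eqb, meq. rewrite forallb_forall. split.
  - intros H i Hi. apply Nat.eqb_eq. apply H. apply in_seq. lia.
  - intros H i Hi. apply in_seq in Hi. apply Nat.eqb_eq. apply H. lia.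
Qed.

Lemma meq_refl k a : meq k a a. Proof. intros i _; auto. Qed.
Lemma meq_sym k a b : meq k a b -> meq k b a. Proof. intros H i Hi; symmetry; auto. Qed.
Lemma meq_trans k a b c : meq k a b -> meq k b c -> meq k a c.
Proof. intros H1 H2 i Hi; rewrite H1; auto. Qed.

Lemma mon_eqb_refl k a : mon_eqb k a a = true.
Proof. apply mon_eqb_spec, meq_refl. Qed.

Definition ind (k : nat) (a : mono) : mono -> R := fun b => if mon_eqb k b a then 1 else 0.

Lemma resp_ind k a : resp k (ind k a).
Proof.
  intros b c H. unfold ind.
  destruct (mon_eqb k b a) eqn:E1, (mon_eqb k c a) eqn:E2; auto; exfalso.
  - apply mon_eqb_spec in E1.
    assert (meq k c a) by (eapply meq_trans; [apply meq_sym; eauto| eauto]).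
    apply mon_eqb_spec in H0. congruence.
  - apply mon_eqb_spec in E2.
    assert (meq k b a) by (eapply meq_trans; eauto).
    apply mon_eqb_spec in H0. congruence.
Qed.

Lemma L_nil f : L f [] = 0. Proof. reflexivity. Qed.
Lemma L_cons f t P : L f (t :: P) = fst t * f (snd t) + L f P. Proof. reflexivity. Qed.
Lemma L_app f P Q : L f (P ++ Q) = L f P + L f Q.
Proof. induction P; simpl; [unfold L; simpl; lra|]. rewrite !L_cons, IHP. lra. Qed.

Lemma L_ext_in f g P : (forall t, In t P -> f (snd t) = g (snd t)) -> L f P = L g P.
Proof.
  induction P as [|t P IH]; intros H; [reflexivity|].
  rewrite !L_cons. rewrite H by (left; auto). rewrite IH; auto. intros; apply H; right; auto.
Qed.
Lemma L_ext f g P : (forall b, f b = g b) -> L f P = L g P.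
Proof. intros; apply L_ext_in; auto. Qed.

Lemma L_add f g P : L (fun b => f b + g b) P = L f P + L g P.
Proof. induction P; [simpl; unfold L; simpl; lra|]. rewrite !L_cons, IHP. lra. Qed.
Lemma L_scal c f P : L (fun b => c * f b) P = c * L f P.
Proof. induction P; [unfold L; simpl; lra|]. rewrite !L_cons, IHP. lra. Qed.
Lemma L_opp f P : L (fun b => - f b) P = - L f P.
Proof. rewrite <- (L_ext (fun b => -1 * f b)) by (intros; lra). rewrite L_scal. lra. Qed.
Lemma L_zerof P : L (fun _ => 0) P = 0.
Proof. induction P; [reflexivity|]. rewrite L_cons, IHP. lra. Qed.

Lemma L_pscale f c P : L f (pscale c P) = c * L f P.
Proof.
  induction P; [unfold L; simpl; lra|]. simpl pscale. rewrite !L_cons, IHP. simpl. lra.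
Qed.

Lemma L_padd f P Q : L f (padd P Q) = L f P + L f Q.
Proof. apply L_app. Qed.
Lemma L_psub f P Q : L f (psub P Q) = L f P - L f Q.
Proof. unfold psub. rewrite L_padd, L_pscale. lra. Qed.

Definition madd (a b : mono) : mono := fun i => (a i + b i)%nat.

Lemma L_pmul f P Q : L f (pmul P Q) = L (fun b => L (fun b' => f (madd b b')) Q) P.
Proof.
  induction P as [|t P IH]; [reflexivity|].
  unfold pmul in *. simpl flat_map. rewrite L_app, IH, L_cons. f_equal.
  clear IH. induction Q as [|u Q IHQ]; [unfold L; simpl; lra|].
  simpl map. rewrite !L_cons, IHQ. simpl fst; simpl snd. unfold madd. rewrite Rmult_plus_distr_l, Rmult_assoc. reflexivity.
Qed.

Lemma L_flat_map {A} f (g : A -> mpoly) l :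
  L f (flat_map g l) = fold_right Rplus 0 (map (fun x => L f (g x)) l).
Proof. induction l; [reflexivity|]. simpl. rewrite L_app, IHl. reflexivity. Qed.

Lemma L_psum f k F : L f (psum k F) = rsum k (fun i => L f (F i)).
Proof. unfold psum, rsum. apply L_flat_map. Qed.

Lemma coef_L k P a : coef k P a = L (ind k a) P.
Proof.
  induction P as [|t P IH]; [reflexivity|].
  unfold coef in *. rewrite L_cons, <- IH. unfold ind. simpl.
  destruct (mon_eqb k (snd t) a); simpl; lra.
Qed.

Lemma L_filter f h P : L f P = L f (filter h P) + L f (filter (fun t => negb (h t)) P).
Proof.
  induction P as [|t P IH]; [unfold L; simpl; lra|]. simpl.
  destruct (h t); simpl; rewrite !L_cons, IH; lra.
Qed.

Definition sumr {A} (g : A -> R) (l : list A) : R := fold_right Rplus 0 (map g l).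

Lemma L_same k f P (t : R * mono) : resp k f ->
  L f (filter (fun u => mon_eqb k (snd u) (snd t)) P) = coef k P (snd t) * f (snd t).
Proof.
  intros Hf. induction P as [|u P IH]; [unfold L, coef; simpl; lra|].
  rewrite coef_L in *. simpl filter. rewrite L_cons. unfold ind at 1.
  destruct (mon_eqb k (snd u) (snd t)) eqn:E.
  - rewrite L_cons, IH. apply mon_eqb_spec in E. rewrite (Hf _ _ E). lra.
  - rewrite IH. lra.
Qed.

Lemma L_reps k P : exists reps : list mono,
  (forall a, In a reps -> exists u, In u P /\ meq k a (snd u)) /\
  (forall f, resp k f -> L f P = sumr (fun a => coef k P a * f a) reps).
Proof.
  remember (length P) as n eqn:Hn. revert P Hn.
  induction n as [n IHn] using lt_wf_ind. intros P Hn.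
  destruct P as [|t P'].
  - exists []. split; [simpl; tauto|]. intros; reflexivity.
  - set (P := t :: P') in *.
    set (rest := filter (fun u => negb (mon_eqb k (snd u) (snd t))) P).
    assert (Hlen : (length rest < n)%nat).
    { subst n. unfold rest, P. simpl. rewrite mon_eqb_refl. simpl.
      pose proof (filter_length_le (fun u => negb (mon_eqb k (snd u) (snd t))) P'). lia. }
    destruct (IHn _ Hlen rest eq_refl) as [R' [HR1 HR2]].
    exists (snd t :: R'). split.
    + intros a [<-|Ha]. * exists t. split; [left; auto| apply meq_refl].
      * destruct (HR1 a Ha) as [u [Hu1 Hu2]]. exists u. split; auto.
        unfold rest in Hu1. apply filter_In in Hu1. tauto.
    + intros f Hf. rewrite (L_filter f (fun u => mon_eqb k (snd u) (snd t)) P).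
      rewrite L_same by auto. fold rest. rewrite HR2 by auto.
      unfold sumr. simpl. f_equal. f_equal. apply map_ext_in. intros a Ha.
      f_equal. rewrite !coef_L.
      rewrite (L_filter (ind k a) (fun u => mon_eqb k (snd u) (snd t)) P). fold rest.
      assert (HZ : L (ind k a) (filter (fun u => mon_eqb k (snd u) (snd t)) P) = 0).
      2:{ rewrite HZ. lra. }
      rewrite (L_ext_in (ind k a) (fun _ => 0)). { apply L_zerof. }
      intros u Hu. apply filter_In in Hu. destruct Hu as [_ Hu].
      apply mon_eqb_spec in Hu. unfold ind.
      destruct (mon_eqb k (snd u) a) eqn:E; auto. apply mon_eqb_spec in E.
      exfalso. destruct (HR1 a Ha) as [v [Hv1 Hv2]].
      unfold rest in Hv1. apply filter_In in Hv1. destruct Hv1 as [_ Hv1].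
      assert (meq k (snd v) (snd t)).
      { eapply meq_trans; [apply meq_sym; eauto|]. eapply meq_trans; [apply meq_sym; eauto|]. auto. }
      apply mon_eqb_spec in H. rewrite H in Hv1. discriminate.
Qed.

Lemma sumr_ext {A} (g h : A -> R) l : (forall a, In a l -> g a = h a) -> sumr g l = sumr h l.
Proof. intros H. unfold sumr. f_equal. apply map_ext_in. auto. Qed.
Lemma sumr_zero {A} (l : list A) : sumr (fun _ => 0) l = 0.
Proof. induction l; simpl; [reflexivity|]. unfold sumr in *; simpl. rewrite IHl. lra. Qed.
Lemma sumr_nonneg {A} (g : A -> R) l : (forall a, In a l -> 0 <= g a) -> 0 <= sumr g l.
Proof. induction l; intros H; simpl; [unfold sumr; simpl; lra|]. unfold sumr in *; simpl.
  assert (0 <= g a) by (apply H; left; auto). assert (0 <= fold_right Rplus 0 (map g l)) by (apply IHl; intros; apply H; right; auto). lra. Qed.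

Lemma L_zero k f P : resp k f -> (forall a, coef k P a = 0) -> L f P = 0.
Proof.
  intros Hf H. destruct (L_reps k P) as [r [_ Hr]]. rewrite Hr by auto.
  rewrite (sumr_ext _ (fun _ => 0)). apply sumr_zero. intros a _. rewrite H. lra.
Qed.

Lemma coef_app k P Q a : coef k (P ++ Q) a = coef k P a + coef k Q a.
Proof. rewrite !coef_L. apply L_app. Qed.
Lemma coef_pscale k c P a : coef k (pscale c P) a = c * coef k P a.
Proof. rewrite !coef_L. apply L_pscale. Qed.

Lemma L_coef_eq k f P Q : resp k f -> (forall a, coef k P a = coef k Q a) -> L f P = L f Q.
Proof.
  intros Hf H. assert (L f (P ++ pscale (-1) Q) = 0).
  { apply (L_zero k); auto. intros a. rewrite coef_app, coef_pscale, H. lra. }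
  rewrite L_app, L_pscale in H0. lra.
Qed.

Lemma L_nonneg k f P : resp k f -> (forall a, 0 <= coef k P a) -> (forall b, 0 <= f b) -> 0 <= L f P.
Proof.
  intros Hf H1 H2. destruct (L_reps k P) as [r [_ Hr]]. rewrite Hr by auto.
  apply sumr_nonneg. intros a _. apply Rmult_le_pos; auto.
Qed.

Definition respb (k : nat) (q : mono -> bool) : Prop := forall a b, meq k a b -> q a = q b.

Lemma L_supp k f q P : resp k f -> respb k q -> (forall a, q a = false -> coef k P a = 0) ->
  L f P = L (fun b => if q b then f b else 0) P.
Proof.
  intros Hf Hq H. destruct (L_reps k P) as [r [_ Hr]]. rewrite !Hr; auto.
  - apply sumr_ext. intros a _. destruct (q a) eqn:E; auto. rewrite H; auto. lra.
  - intros a b Hab. rewrite (Hq a b Hab). destruct (q b); auto.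
Qed.

Lemma mdeg_meq k a b : meq k a b -> mdeg k a = mdeg k b.
Proof.
  intros H. unfold mdeg. f_equal. apply map_ext_in. intros i Hi. apply in_seq in Hi. apply H. lia.
Qed.

Lemma fold_add_map_add (l : list nat) (a b : mono) :
  fold_right Nat.add 0%nat (map (fun i => (a i + b i)%nat) l) =
  (fold_right Nat.add 0%nat (map a l) + fold_right Nat.add 0%nat (map b l))%nat.
Proof. induction l; simpl; lia. Qed.

Lemma mdeg_madd k a b : mdeg k (madd a b) = (mdeg k a + mdeg k b)%nat.
Proof. unfold mdeg, madd. apply fold_add_map_add. Qed.

Lemma mdeg_zero k : mdeg k (fun _ => 0%nat) = 0%nat.
Proof. unfold mdeg. induction (seq 0 k); simpl; lia. Qed.

Definition evec (i : nat) : mono := fun j => if Nat.eqb j i then 1%nat else 0%nat.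

Lemma fold_evec l i : NoDup l ->
  fold_right Nat.add 0%nat (map (evec i) l) = if existsb (Nat.eqb i) l then 1%nat else 0%nat.
Proof.
  induction l as [|x l IH]; intros Hnd; simpl; auto. inversion Hnd; subst.
  rewrite IH by auto. unfold evec. rewrite (Nat.eqb_sym x i).
  destruct (Nat.eqb i x) eqn:E; simpl.
  - apply Nat.eqb_eq in E; subst. destruct (existsb (Nat.eqb x) l) eqn:E2; auto.
    apply existsb_exists in E2. destruct E2 as [y [Hy Hy2]]. apply Nat.eqb_eq in Hy2; subst. contradiction.
  - lia.
Qed.

Lemma mdeg_evec k i : (i < k)%nat -> mdeg k (evec i) = 1%nat.
Proof.
  intros H. unfold mdeg. rewrite fold_evec by apply seq_NoDup.
  destruct (existsb (Nat.eqb i) (seq 0 k)) eqn:E; auto.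
  exfalso. assert (existsb (Nat.eqb i) (seq 0 k) = true); [|congruence].
  apply existsb_exists. exists i. split; [apply in_seq; lia| apply Nat.eqb_refl].
Qed.

Definition Hom (k D : nat) (P : mpoly) : Prop := forall a, mdeg k a <> D -> coef k P a = 0.

Lemma Hom_L k D P f : Hom k D P -> resp k f ->
  L f P = L (fun b => if Nat.eqb (mdeg k b) D then f b else 0) P.
Proof.
  intros H Hf. apply L_supp with (k := k); auto.
  - intros a b Hab. rewrite (mdeg_meq k a b Hab). auto.
  - intros a Ha. apply H. apply Nat.eqb_neq; auto.
Qed.

Lemma Hom_app k D P Q : Hom k D P -> Hom k D Q -> Hom k D (P ++ Q).
Proof. intros H1 H2 a Ha. rewrite coef_app, H1, H2 by auto. lra. Qed.
Lemma Hom_pscale k D c P : Hom k D P -> Hom k D (pscale c P).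
Proof. intros H a Ha. rewrite coef_pscale, H by auto. lra. Qed.
Lemma Hom_padd k D P Q : Hom k D P -> Hom k D Q -> Hom k D (padd P Q).
Proof. apply Hom_app. Qed.
Lemma Hom_psub k D P Q : Hom k D P -> Hom k D Q -> Hom k D (psub P Q).
Proof. intros; apply Hom_padd; auto; apply Hom_pscale; auto. Qed.

Lemma Hom_pconst k c : Hom k 0 (pconst c).
Proof.
  intros a Ha. unfold coef, pconst. simpl.
  destruct (mon_eqb k (fun _ => 0%nat) a) eqn:E; simpl; [|lra].
  apply mon_eqb_spec in E. apply mdeg_meq in E. rewrite mdeg_zero in E. lia.
Qed.

Lemma Hom_pvar k i : (i < k)%nat -> Hom k 1 (pvar i).
Proof.
  intros Hi a Ha. unfold coef, pvar. simpl.
  destruct (mon_eqb k _ a) eqn:E; simpl; [|lra].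
  apply mon_eqb_spec in E. apply mdeg_meq in E. fold (evec i) in E. rewrite mdeg_evec in E; lia.
Qed.

Lemma meq_madd_l k a b c : meq k a b -> meq k (madd a c) (madd b c).
Proof. intros H i Hi. unfold madd. rewrite H; auto. Qed.
Lemma meq_madd_r k a b c : meq k a b -> meq k (madd c a) (madd c b).
Proof. intros H i Hi. unfold madd. rewrite H; auto. Qed.

Lemma coef_pmul k P Q a :
  coef k (pmul P Q) a = L (fun b => L (fun b' => ind k a (madd b b')) Q) P.
Proof. rewrite coef_L. apply L_pmul. Qed.

Lemma Hom_pmul k D1 D2 P Q : Hom k D1 P -> Hom k D2 Q -> Hom k (D1 + D2) (pmul P Q).
Proof.
  intros H1 H2 a Ha. rewrite coef_pmul.
  rewrite (Hom_L k D1 P).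
  2: auto.
  2:{ intros b c Hbc. apply L_ext. intros b'. apply resp_ind. apply meq_madd_l; auto. }
  rewrite (L_ext _ (fun _ => 0)). apply L_zerof. intros b.
  destruct (Nat.eqb (mdeg k b) D1) eqn:E; auto. apply Nat.eqb_eq in E.
  rewrite (Hom_L k D2 Q); auto.
  2:{ intros c c' Hc. apply resp_ind. apply meq_madd_r; auto. }
  rewrite (L_ext _ (fun _ => 0)). apply L_zerof. intros b'.
  destruct (Nat.eqb (mdeg k b') D2) eqn:E2; auto. apply Nat.eqb_eq in E2.
  unfold ind. destruct (mon_eqb k (madd b b') a) eqn:E3; auto.
  apply mon_eqb_spec, mdeg_meq in E3. rewrite mdeg_madd in E3. lia.
Qed.

Lemma Hom_ppow k D P e : Hom k D P -> Hom k (e * D) (ppow P e).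
Proof.
  intros H. induction e; simpl.
  - apply Hom_pconst.
  - apply Hom_pmul; auto.
Qed.

Lemma coef_psum k n F a : coef k (psum n F) a = rsum n (fun i => coef k (F i) a).
Proof. rewrite coef_L, L_psum. unfold rsum. f_equal. apply map_ext. intros; rewrite coef_L; auto. Qed.

Lemma Hom_psum k D n F : (forall i, (i < n)%nat -> Hom k D (F i)) -> Hom k D (psum n F).
Proof.
  intros H a Ha. rewrite coef_psum. unfold rsum.
  rewrite (map_ext_in _ (fun _ => 0)). { induction (seq 0 n); simpl; auto; lra. }
  intros i Hi. apply in_seq in Hi. apply H; auto. lia.
Qed.

Definition img (k : nat) (q : nat -> mpoly) (b : mono) : mpoly :=
  fold_right pmul (pconst 1) (map (fun i => ppow (q i) (b i)) (seq 0 k)).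

Lemma coef_psubst K k P q a :
  coef K (psubst k P q) a = L (fun b => coef K (img k q b) a) P.
Proof.
  rewrite coef_L. unfold psubst. rewrite L_flat_map. unfold L at 2.
  f_equal. apply map_ext. intros t. rewrite L_pscale, coef_L. reflexivity.
Qed.

Lemma img_meq k q b c : meq k b c -> img k q b = img k q c.
Proof.
  intros H. unfold img. f_equal. apply map_ext_in. intros i Hi. apply in_seq in Hi. rewrite H; auto. lia.
Qed.

Lemma Hom_img K k e q b : (forall i, (i < k)%nat -> Hom K e (q i)) -> Hom K (e * mdeg k b) (img k q b).
Proof.
  intros H. unfold img, mdeg. assert (Hl : forall i, In i (seq 0 k) -> (i < k)%nat).
  { intros i Hi; apply in_seq in Hi; lia. }
  induction (seq 0 k) as [|i l IH]; simpl.
  - rewrite Nat.mul_0_r. apply Hom_pconst.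
  - rewrite Nat.mul_add_distr_l. apply Hom_pmul.
    + rewrite Nat.mul_comm. apply Hom_ppow. apply H, Hl; left; auto.
    + apply IH. intros; apply Hl; right; auto.
Qed.

Lemma Hom_psubst K k e D P q : Hom k D P -> (forall i, (i < k)%nat -> Hom K e (q i)) ->
  Hom K (e * D) (psubst k P q).
Proof.
  intros HP Hq a Ha. rewrite coef_psubst. rewrite (Hom_L k D P); auto.
  2:{ intros b c H. rewrite (img_meq k q b c H). auto. }
  rewrite (L_ext _ (fun _ => 0)). apply L_zerof. intros b.
  destruct (Nat.eqb (mdeg k b) D) eqn:E; auto. apply Nat.eqb_eq in E.
  apply (Hom_img K k e q b Hq). rewrite E. auto.
Qed.

Definition hm (n yi D : nat) (b : mono) : mono :=
  fun i => if Nat.ltb i n then b i else if Nat.eqb i yi then (D - mdeg n b)%nat else 0%nat.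

Lemma L_homog f n yi D P : L f (homog n yi D P) = L (fun b => f (hm n yi D b)) P.
Proof. induction P; [reflexivity|]. simpl homog. rewrite !L_cons, IHP. reflexivity. Qed.

Lemma coef_meq k P a b : meq k a b -> coef k P a = coef k P b.
Proof.
  intros H. rewrite !coef_L. apply L_ext. intros c. unfold ind.
  destruct (mon_eqb k c a) eqn:E1, (mon_eqb k c b) eqn:E2; auto; exfalso.
  - apply mon_eqb_spec in E1. assert (meq k c b) by (eapply meq_trans; eauto).
    apply mon_eqb_spec in H0; congruence.
  - apply mon_eqb_spec in E2. assert (meq k c a) by (eapply meq_trans; eauto; apply meq_sym; auto).
    apply mon_eqb_spec in H0; congruence.
Qed.

Lemma fold_max_ge x l : In x l -> (x <= fold_right Nat.max 0 l)%nat.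
Proof. induction l; simpl; [tauto|]. intros [->|H]; [lia|]. specialize (IHl H); lia. Qed.

Lemma coef_support k P a : coef k P a <> 0 -> exists u, In u P /\ meq k (snd u) a.
Proof.
  intros H. apply NNPP. intros Hn. apply H. rewrite coef_L.
  rewrite (L_ext_in _ (fun _ => 0)). apply L_zerof.
  intros t Ht. unfold ind. destruct (mon_eqb k (snd t) a) eqn:E; auto.
  exfalso. apply Hn. exists t. split; auto. apply mon_eqb_spec; auto.
Qed.

Lemma pdeg_bound k P a : coef k P a <> 0 -> (mdeg k a <= pdeg k P)%nat.
Proof.
  intros H. destruct (coef_support k P a H) as [u [Hu Hm]].
  unfold pdeg. eapply Nat.le_trans; [|apply fold_max_ge; apply in_map; exact Hu].
  simpl. destruct (Req_EM_T (coef k P (snd u)) 0) as [E|E].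
  - exfalso. rewrite (coef_meq k P _ _ Hm) in E. auto.
  - rewrite (mdeg_meq k _ _ Hm). lia.
Qed.

Lemma fold_ind_v (l : list nat) y v : NoDup l ->
  fold_right Nat.add 0%nat (map (fun i => if Nat.eqb i y then v else 0%nat) l)
  = if existsb (Nat.eqb y) l then v else 0%nat.
Proof.
  induction l as [|x l IH]; intros Hnd; simpl; auto. inversion Hnd; subst.
  rewrite IH by auto. rewrite (Nat.eqb_sym x y).
  destruct (Nat.eqb y x) eqn:E; simpl.
  - apply Nat.eqb_eq in E; subst. destruct (existsb (Nat.eqb x) l) eqn:E2; auto.
    apply existsb_exists in E2. destruct E2 as [z [Hz Hz2]]. apply Nat.eqb_eq in Hz2; subst. contradiction.
  - lia.
Qed.

Lemma mdeg_hm n yi D N b : (n <= yi)%nat -> (yi < N)%nat -> (mdeg n b <= D)%nat ->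
  mdeg N (hm n yi D b) = D.
Proof.
  intros H1 H2 H3. unfold mdeg. replace N with (n + (N - n))%nat by lia.
  rewrite seq_app, map_app, fold_right_app.
  assert (E1 : map (hm n yi D b) (seq 0 (N - n)) = map (hm n yi D b) (seq 0 (N-n))) by auto.
  rewrite (map_ext_in (hm n yi D b) (fun i => if Nat.eqb i yi then (D - mdeg n b)%nat else 0%nat) (seq (0 + n) (N - n))).
  2:{ intros i Hi. apply in_seq in Hi. unfold hm. destruct (Nat.ltb i n) eqn:E; auto. apply Nat.ltb_lt in E. lia. }
  rewrite fold_ind_v by apply seq_NoDup.
  destruct (existsb (Nat.eqb yi) (seq (0 + n) (N - n))) eqn:E.
  2:{ exfalso. assert (existsb (Nat.eqb yi) (seq (0 + n) (N - n)) = true); [|congruence].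
      apply existsb_exists. exists yi. split; [apply in_seq; lia| apply Nat.eqb_refl]. }
  assert (Hfirst : forall a, fold_right Nat.add a (map (hm n yi D b) (seq 0 n)) =
     (fold_right Nat.add 0%nat (map b (seq 0 n)) + a)%nat).
  { intros a. assert (Hs : forall i, In i (seq 0 n) -> hm n yi D b i = b i).
    { intros i Hi. apply in_seq in Hi. unfold hm. destruct (Nat.ltb i n) eqn:E'; auto. apply Nat.ltb_ge in E'. lia. }
    induction (seq 0 n) as [|x l IH]; simpl; auto.
    rewrite Hs by (left; auto). rewrite IH. lia. intros; apply Hs; right; auto. }
  rewrite Hfirst. change (fold_right Nat.add 0%nat (map b (seq 0 n))) with (mdeg n b). lia.
Qed.

Lemma Hom_homog n yi D N P : (n <= yi)%nat -> (yi < N)%nat ->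
  (forall a, coef n P a <> 0 -> (mdeg n a <= D)%nat) -> Hom N D (homog n yi D P).
Proof.
  intros H1 H2 H3 a Ha. rewrite coef_L, L_homog.
  assert (Hresp : resp n (fun b => ind N a (hm n yi D b))).
  { intros b c Hbc. apply resp_ind. intros i Hi. unfold hm.
    destruct (Nat.ltb i n) eqn:E. apply Nat.ltb_lt in E. auto.
    rewrite (mdeg_meq n b c Hbc). auto. }
  rewrite (L_supp n _ (fun b => Nat.leb (mdeg n b) D)); auto.
  - rewrite (L_ext _ (fun _ => 0)). apply L_zerof. intros b.
    destruct (Nat.leb (mdeg n b) D) eqn:E; auto. apply Nat.leb_le in E.
    unfold ind. destruct (mon_eqb N (hm n yi D b) a) eqn:E2; auto.
    apply mon_eqb_spec, mdeg_meq in E2. rewrite mdeg_hm in E2; auto. lia.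
  - intros b c Hbc. rewrite (mdeg_meq n b c Hbc). auto.
  - intros b Hb. destruct (Req_dec (coef n P b) 0); auto. apply H3 in H. apply Nat.leb_gt in Hb. lia.
Qed.

Definition Ev (k : nat) (P : mpoly) : Prop :=
  forall t, In t P -> forall i, (i < k)%nat -> Nat.Even (snd t i).

Lemma Ev_app k P Q : Ev k P -> Ev k Q -> Ev k (P ++ Q).
Proof. intros H1 H2 t Ht. apply in_app_or in Ht. destruct Ht; auto. Qed.
Lemma Ev_pscale k c P : Ev k P -> Ev k (pscale c P).
Proof. intros H t Ht. unfold pscale in Ht. apply in_map_iff in Ht. destruct Ht as [u [<- Hu]]. simpl. apply H; auto. Qed.
Lemma Ev_padd k P Q : Ev k P -> Ev k Q -> Ev k (padd P Q).
Proof. apply Ev_app. Qed.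
Lemma Ev_psub k P Q : Ev k P -> Ev k Q -> Ev k (psub P Q).
Proof. intros; apply Ev_padd; auto; apply Ev_pscale; auto. Qed.
Lemma Ev_pconst k c : Ev k (pconst c).
Proof. intros t [<-|[]] i _. exists 0%nat. reflexivity. Qed.
Lemma Ev_pmul k P Q : Ev k P -> Ev k Q -> Ev k (pmul P Q).
Proof.
  intros H1 H2 t Ht i Hi. unfold pmul in Ht. apply in_flat_map in Ht. destruct Ht as [u [Hu Ht]].
  apply in_map_iff in Ht. destruct Ht as [v [<- Hv]]. simpl.
  destruct (H1 u Hu i Hi) as [x Hx]. destruct (H2 v Hv i Hi) as [y Hy]. exists (x + y)%nat. unfold mono in *. rewrite Hx, Hy. lia.
Qed.
Lemma Ev_ppow k P e : Ev k P -> Ev k (ppow P e).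
Proof. intros H. induction e; simpl; [apply Ev_pconst| apply Ev_pmul; auto]. Qed.
Lemma Ev_psum k n F : (forall i, Ev k (F i)) -> Ev k (psum n F).
Proof. intros H t Ht. unfold psum in Ht. apply in_flat_map in Ht. destruct Ht as [i [_ Ht]]. apply (H i); auto. Qed.
Lemma Ev_psubst K k P q : (forall i, Ev K (q i)) -> Ev K (psubst k P q).
Proof.
  intros H t Ht. unfold psubst in Ht. apply in_flat_map in Ht. destruct Ht as [u [_ Ht]].
  revert t Ht. apply Ev_pscale. induction (seq 0 k); simpl; [apply Ev_pconst|].
  apply Ev_pmul; auto. apply Ev_ppow; auto.
Qed.
Lemma Ev_pvar2 k i : Ev k (ppow (pvar i) 2).
Proof.
  intros t Ht j _. simpl in Ht. destruct Ht as [<-|[]]. simpl. exists (if Nat.eqb j i then 1 else 0)%nat.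
  destruct (Nat.eqb j i); lia.
Qed.

Definition prodl (l : list nat) (f : nat -> R) : R := fold_right Rmult 1 (map f l).
Definition mon (k : nat) (x : nat -> R) (b : mono) : R := rprod k (fun i => x i ^ b i).

Lemma peval_L k P x : peval k P x = L (mon k x) P.
Proof. reflexivity. Qed.

Lemma prodl_mul l f g : prodl l (fun i => f i * g i) = prodl l f * prodl l g.
Proof. unfold prodl; induction l; simpl; [lra|]. rewrite IHl. ring. Qed.
Lemma prodl_ext_in l f g : (forall i, In i l -> f i = g i) -> prodl l f = prodl l g.
Proof. intros H. unfold prodl. f_equal. apply map_ext_in. auto. Qed.
Lemma prodl_one l : prodl l (fun _ => 1) = 1.
Proof. unfold prodl; induction l; simpl; [lra|]. rewrite IHl. ring. Qed.
Lemma prodl_app l1 l2 f : prodl (l1 ++ l2) f = prodl l1 f * prodl l2 f.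
Proof. unfold prodl. rewrite map_app, fold_right_app. induction l1; simpl; [lra|]. rewrite IHl1. ring. Qed.

Lemma mon_madd k x a b : mon k x (madd a b) = mon k x a * mon k x b.
Proof.
  unfold mon, rprod, madd. fold (prodl (seq 0 k) (fun i => x i ^ (a i + b i))).
  fold (prodl (seq 0 k) (fun i => x i ^ a i)). fold (prodl (seq 0 k) (fun i => x i ^ b i)).
  rewrite <- prodl_mul. apply prodl_ext_in. intros; apply pow_add.
Qed.

Lemma mon_resp k x : resp k (mon k x).
Proof.
  intros a b H. unfold mon, rprod. f_equal. apply map_ext_in. intros i Hi. apply in_seq in Hi. rewrite H; auto. lia.
Qed.

Lemma peval_pmul k P Q x : peval k (pmul P Q) x = peval k P x * peval k Q x.
Proof.
  rewrite !peval_L, L_pmul.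
  transitivity (L (fun b => peval k Q x * mon k x b) P).
  - apply L_ext. intros b.
    rewrite (L_ext _ (fun b' => mon k x b * mon k x b')) by (intros; apply mon_madd).
    rewrite L_scal, peval_L. ring.
  - rewrite L_scal, peval_L. ring.
Qed.
Lemma peval_padd k P Q x : peval k (padd P Q) x = peval k P x + peval k Q x.
Proof. rewrite !peval_L. apply L_padd. Qed.
Lemma peval_pscale k c P x : peval k (pscale c P) x = c * peval k P x.
Proof. rewrite !peval_L. apply L_pscale. Qed.
Lemma peval_psub k P Q x : peval k (psub P Q) x = peval k P x - peval k Q x.
Proof. rewrite !peval_L. apply L_psub. Qed.
Lemma peval_psum k n F x : peval k (psum n F) x = rsum n (fun i => peval k (F i) x).
Proof. rewrite !peval_L. apply L_psum. Qed.
Lemma mon_zero k x : mon k x (fun _ => 0%nat) = 1.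
Proof. unfold mon, rprod. fold (prodl (seq 0 k) (fun i => x i ^ 0)). simpl. apply prodl_one. Qed.
Lemma peval_pconst k c x : peval k (pconst c) x = c.
Proof. rewrite peval_L. unfold pconst. rewrite L_cons, L_nil. simpl. rewrite mon_zero. ring. Qed.
Lemma peval_ppow k P e x : peval k (ppow P e) x = peval k P x ^ e.
Proof. induction e; simpl; [apply peval_pconst|]. rewrite peval_pmul, IHe. ring. Qed.

Lemma prodl_evec l i (y : R) : NoDup l ->
  prodl l (fun j => (if Nat.eqb j i then y else 1)) = if existsb (Nat.eqb i) l then y else 1.
Proof.
  unfold prodl. induction l as [|x l IH]; intros Hnd; simpl; auto. inversion Hnd; subst.
  rewrite IH by auto. rewrite (Nat.eqb_sym x i).
  destruct (Nat.eqb i x) eqn:E; simpl.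
  - apply Nat.eqb_eq in E; subst. destruct (existsb (Nat.eqb x) l) eqn:E2; [|ring].
    apply existsb_exists in E2. destruct E2 as [z [Hz Hz2]]. apply Nat.eqb_eq in Hz2; subst. contradiction.
  - ring.
Qed.

Lemma mon_evec k x i : (i < k)%nat -> mon k x (evec i) = x i.
Proof.
  intros Hi. unfold mon, rprod. fold (prodl (seq 0 k) (fun j => x j ^ evec i j)).
  rewrite (prodl_ext_in _ _ (fun j => if Nat.eqb j i then x i else 1)).
  2:{ intros j _. unfold evec. destruct (Nat.eqb j i) eqn:E; simpl; [apply Nat.eqb_eq in E; subst|]; ring. }
  rewrite prodl_evec by apply seq_NoDup.
  destruct (existsb (Nat.eqb i) (seq 0 k)) eqn:E; auto.
  exfalso. assert (existsb (Nat.eqb i) (seq 0 k) = true); [|congruence].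
  apply existsb_exists. exists i. split; [apply in_seq; lia| apply Nat.eqb_refl].
Qed.

Lemma peval_pvar k i x : (i < k)%nat -> peval k (pvar i) x = x i.
Proof. intros Hi. rewrite peval_L. unfold pvar. rewrite L_cons, L_nil. simpl. fold (evec i). rewrite mon_evec; auto. ring. Qed.

Lemma peval_ext k P x y : (forall i, (i < k)%nat -> x i = y i) -> peval k P x = peval k P y.
Proof.
  intros H. rewrite !peval_L. apply L_ext. intros b. unfold mon, rprod. f_equal. apply map_ext_in.
  intros i Hi. apply in_seq in Hi. rewrite H; auto. lia.
Qed.

Lemma peval_img_l K q (b : mono) l x :
  peval K (fold_right pmul (pconst 1) (map (fun i => ppow (q i) (b i)) l)) x
  = fold_right Rmult 1 (map (fun i => peval K (q i) x ^ b i) l).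
Proof.
  induction l; simpl; [apply peval_pconst|]. rewrite peval_pmul, peval_ppow, IHl. reflexivity.
Qed.

Lemma peval_psubst K k P q x : peval K (psubst k P q) x = peval k P (fun i => peval K (q i) x).
Proof.
  rewrite peval_L. unfold psubst. rewrite L_flat_map. rewrite peval_L. unfold L at 2.
  f_equal. apply map_ext. intros t. rewrite L_pscale. f_equal.
  rewrite <- peval_L. rewrite peval_img_l. reflexivity.
Qed.

Lemma mon_hm n yi D N z b : (n <= yi)%nat -> (yi < N)%nat ->
  mon N z (hm n yi D b) = mon n z b * z yi ^ (D - mdeg n b).
Proof.
  intros H1 H2. unfold mon, rprod. replace N with (n + (N - n))%nat by lia.
  rewrite seq_app. fold (prodl (seq 0 n ++ seq (0 + n) (N - n)) (fun i => z i ^ hm n yi D b i)).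
  rewrite prodl_app. fold (prodl (seq 0 n) (fun i => z i ^ b i)). f_equal.
  - apply prodl_ext_in. intros i Hi. apply in_seq in Hi. unfold hm.
    destruct (Nat.ltb i n) eqn:E; auto. apply Nat.ltb_ge in E. lia.
  - rewrite (prodl_ext_in _ _ (fun j => if Nat.eqb j yi then z yi ^ (D - mdeg n b) else 1)).
    2:{ intros i Hi. apply in_seq in Hi. unfold hm. destruct (Nat.ltb i n) eqn:E.
        apply Nat.ltb_lt in E. lia. destruct (Nat.eqb i yi) eqn:E2; [apply Nat.eqb_eq in E2; subst|]; simpl; ring. }
    rewrite prodl_evec by apply seq_NoDup.
    destruct (existsb (Nat.eqb yi) (seq (0 + n) (N - n))) eqn:E; auto.
    exfalso. assert (existsb (Nat.eqb yi) (seq (0 + n) (N - n)) = true); [|congruence].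
    apply existsb_exists. exists yi. split; [apply in_seq; lia| apply Nat.eqb_refl].
Qed.

Lemma peval_homog n yi D N P z : (n <= yi)%nat -> (yi < N)%nat ->
  peval N (homog n yi D P) z = L (fun b => mon n z b * z yi ^ (D - mdeg n b)) P.
Proof.
  intros H1 H2. rewrite peval_L, L_homog. apply L_ext. intros b. apply mon_hm; auto.
Qed.

Lemma peval_homog_1 n yi D N P z : (n <= yi)%nat -> (yi < N)%nat -> z yi = 1 ->
  peval N (homog n yi D P) z = peval n P z.
Proof.
  intros H1 H2 H3. rewrite peval_homog by auto. rewrite peval_L. apply L_ext. intros b.
  rewrite H3, pow1. ring.
Qed.

Lemma mon_div n z y b : y <> 0 -> mon n (fun i => z i / y) b = mon n z b * (/ y) ^ mdeg n b.
Proof.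
  intros Hy. unfold mon, rprod, mdeg. induction (seq 0 n); simpl; [ring|].
  rewrite IHl, pow_add. unfold Rdiv. rewrite Rpow_mult_distr. ring.
Qed.

Lemma peval_homog_y n yi D N P z : (n <= yi)%nat -> (yi < N)%nat -> z yi <> 0 ->
  (forall a, coef n P a <> 0 -> (mdeg n a <= D)%nat) ->
  peval N (homog n yi D P) z = z yi ^ D * peval n P (fun i => z i / z yi).
Proof.
  intros H1 H2 H3 H4. rewrite peval_homog by auto. rewrite peval_L.
  set (q := fun b => Nat.leb (mdeg n b) D).
  assert (Hq : respb n q). { intros a b Hab. unfold q. rewrite (mdeg_meq n a b Hab). auto. }
  assert (Hs : forall a, q a = false -> coef n P a = 0).
  { intros a Ha. destruct (Req_dec (coef n P a) 0); auto. apply H4 in H. unfold q in Ha. apply Nat.leb_gt in Ha. lia. }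
  rewrite (L_supp n _ q P); auto.
  2:{ intros a b Hab. rewrite (mon_resp n z a b Hab), (mdeg_meq n a b Hab). auto. }
  rewrite (L_supp n (mon n (fun i => z i / z yi)) q P); auto. 2: apply mon_resp.
  rewrite <- L_scal. apply L_ext. intros b. unfold q. destruct (Nat.leb (mdeg n b) D) eqn:E; [|ring].
  apply Nat.leb_le in E. rewrite mon_div by auto.
  replace D with (mdeg n b + (D - mdeg n b))%nat at 2 by lia. rewrite pow_add.
  rewrite pow_inv by auto. field. apply pow_nonzero; auto.
Qed.

Lemma fold_max_ge0 a l : (a <= fold_right Nat.max a l)%nat.
Proof. induction l; simpl; lia. Qed.
Lemma fold_max_ge_in a x l : In x l -> (x <= fold_right Nat.max a l)%nat.
Proof. induction l; simpl; [tauto|]. intros [->|H]; [lia|]. specialize (IHl H); lia. Qed.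

Lemma dd_ge1 n m p g : (1 <= dd n m p g)%nat.
Proof. unfold dd. lia. Qed.
Lemma dd_max n m p g : (maxdeg n m p g <= 2 * dd n m p g)%nat.
Proof.
  unfold dd. set (M := maxdeg n m p g).
  pose proof (Nat.div_mod (M + 1) 2 ltac:(lia)). pose proof (Nat.mod_upper_bound (M+1) 2 ltac:(lia)).
  lia.
Qed.

Lemma supp_p n m p g a : coef n p a <> 0 -> (mdeg n a <= 2 * dd n m p g)%nat.
Proof.
  intros H. apply pdeg_bound in H. pose proof (dd_max n m p g).
  assert (pdeg n p <= maxdeg n m p g)%nat by apply fold_max_ge0. lia.
Qed.
Lemma supp_g n m p g j a : (j < m)%nat -> coef n (g j) a <> 0 -> (mdeg n a <= 2 * dd n m p g)%nat.
Proof.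
  intros Hj H. apply pdeg_bound in H. pose proof (dd_max n m p g).
  assert (pdeg n (g j) <= maxdeg n m p g)%nat.
  { apply fold_max_ge_in. apply (in_map (fun j => pdeg n (g j))). apply in_seq. lia. } lia.
Qed.

Lemma rsum_ext_in k f g : (forall i, (i < k)%nat -> f i = g i) -> rsum k f = rsum k g.
Proof. intros H. unfold rsum. f_equal. apply map_ext_in. intros i Hi. apply in_seq in Hi. apply H. lia. Qed.

Lemma peval_pvar_pow k i e x : (i < k)%nat -> peval k (ppow (pvar i) e) x = x i ^ e.
Proof. intros; rewrite peval_ppow, peval_pvar; auto. Qed.

Definition cc (m : nat) (Rb : R) (eta : nat -> R) (beta : R) : R := Rb + rsum m eta + beta.

Lemma peval_hform n m p g Rb eta beta z :
  let d := dd n m p g in let yi := (n + m + 2)%nat in let N := (n + m + 3)%nat in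
  peval N (hform n m p g Rb eta beta) z =
    (peval N (homog n yi (2 * d) p) z + z n ^ 2 * z yi ^ (2 * d - 2)) ^ 2
  + rsum m (fun j => (peval N (homog n yi (2 * d) (g j)) z - z (n + S j)%nat ^ 2 * z yi ^ (2 * d - 2)) ^ 2)
  + (cc m Rb eta beta ^ d * z yi ^ (2 * d)
     - (rsum n (fun i => z i ^ 2) + rsum (S m) (fun j => z (n + j)%nat ^ 2)) ^ d
     - z (n + S m)%nat ^ (2 * d)) ^ 2.
Proof.
  intros d yi N. unfold hform. fold d. fold yi.
  rewrite !peval_padd, peval_ppow, peval_padd, peval_pmul, !peval_pvar_pow by lia.
  rewrite peval_psum. rewrite (rsum_ext_in m _ (fun j => (peval N (homog n yi (2 * d) (g j)) z - z (n + S j)%nat ^ 2 * z yi ^ (2 * d - 2)) ^ 2)).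
  2:{ intros j Hj. rewrite peval_ppow, peval_psub, peval_pmul, !peval_pvar_pow by lia. reflexivity. }
  rewrite peval_ppow, !peval_psub, peval_pscale, !peval_ppow, peval_padd, !peval_psum, !peval_pvar by lia.
  rewrite (rsum_ext_in n _ (fun i => z i ^ 2)) by (intros; apply peval_pvar_pow; lia).
  rewrite (rsum_ext_in (S m) _ (fun j => z (n + j)%nat ^ 2)) by (intros; apply peval_pvar_pow; lia).
  unfold cc. rewrite Nat.add_0_r. rewrite <- (Rplus_assoc (_ ^ 2)). reflexivity.
Qed.

Lemma Hom_eq k D D' P : D = D' -> Hom k D P -> Hom k D' P.
Proof. intros ->; auto. Qed.

Lemma Hom_pvarpow k i e : (i < k)%nat -> Hom k e (ppow (pvar i) e).
Proof. intros Hi. apply (Hom_eq k (e * 1)); [lia|]. apply Hom_ppow, Hom_pvar; auto. Qed.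

Lemma Hom_hform n m p g Rb eta beta :
  Hom (n + m + 3) (4 * dd n m p g) (hform n m p g Rb eta beta).
Proof.
  pose proof (dd_ge1 n m p g) as Hd.
  unfold hform. set (d := dd n m p g) in *. set (N := (n + m + 3)%nat).
  assert (HS : Hom N (2 * d) (pmul (ppow (pvar (n + 0)) 2) (ppow (pvar (n + m + 2)) (2 * d - 2)))).
  { apply (Hom_eq N (2 + (2 * d - 2))); [lia|]. apply Hom_pmul; apply Hom_pvarpow; unfold N; lia. }
  apply Hom_padd; [|apply Hom_padd].
  - apply (Hom_eq N (2 * (2 * d))); [lia|]. apply Hom_ppow. apply Hom_padd; auto.
    apply Hom_homog; try (unfold N; lia). intros a Ha. apply (supp_p n m p g a Ha).
  - apply Hom_psum. intros j Hj.
    apply (Hom_eq N (2 * (2 * d))); [lia|]. apply Hom_ppow. apply Hom_psub.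
    + apply Hom_homog; try (unfold N; lia). intros a Ha. apply (supp_g n m p g j a Hj Ha).
    + apply (Hom_eq N (2 + (2 * d - 2))); [lia|]. apply Hom_pmul; apply Hom_pvarpow; unfold N; lia.
  - apply (Hom_eq N (2 * (2 * d))); [lia|]. apply Hom_ppow. apply Hom_psub; [apply Hom_psub|].
    + apply Hom_pscale. apply Hom_pvarpow. unfold N; lia.
    + apply (Hom_eq N (d * 2)); [lia|]. apply Hom_ppow. apply Hom_padd; apply Hom_psum; intros i Hi;
      apply Hom_pvarpow; unfold N; lia.
    + apply Hom_pvarpow. unfold N; lia.
Qed.

Lemma mon_scale k lam z b : mon k (fun i => lam * z i) b = lam ^ mdeg k b * mon k z b.
Proof.
  unfold mon, rprod, mdeg. induction (seq 0 k); simpl; [ring|].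
  rewrite IHl, pow_add, Rpow_mult_distr. ring.
Qed.

Lemma peval_scale k D P lam z : Hom k D P ->
  peval k P (fun i => lam * z i) = lam ^ D * peval k P z.
Proof.
  intros H. rewrite !peval_L. rewrite (Hom_L k D P); auto. 2: apply mon_resp.
  rewrite (Hom_L k D P (mon k z)); auto. 2: apply mon_resp.
  rewrite <- L_scal. apply L_ext. intros b. destruct (Nat.eqb (mdeg k b) D) eqn:E; [|ring].
  apply Nat.eqb_eq in E. rewrite mon_scale, E. ring.
Qed.

Lemma rsum_nonneg k f : (forall i, (i < k)%nat -> 0 <= f i) -> 0 <= rsum k f.
Proof.
  intros H. unfold rsum. assert (Hl : forall i, In i (seq 0 k) -> 0 <= f i).
  { intros i Hi; apply in_seq in Hi; apply H; lia. }
  induction (seq 0 k); simpl; [lra|].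
  assert (0 <= f a) by (apply Hl; left; auto).
  assert (0 <= fold_right Rplus 0 (map f l)) by (apply IHl; intros; apply Hl; right; auto). lra.
Qed.

Lemma list_zero_each (f : nat -> R) l : (forall i, In i l -> 0 <= f i) ->
  fold_right Rplus 0 (map f l) <= 0 -> forall i, In i l -> f i = 0.
Proof.
  induction l as [|a l IH]; intros Hl Hs i Hi; simpl in *; [tauto|].
  assert (0 <= f a) by (apply Hl; left; auto).
  assert (0 <= fold_right Rplus 0 (map f l)).
  { clear -Hl. induction l; simpl; [lra|]. assert (0 <= f a0) by (apply Hl; right; left; auto).
    assert (0 <= fold_right Rplus 0 (map f l)); [|lra]. apply IHl. intros j [<-|Hj]; apply Hl; auto; right; right; auto. }
  destruct Hi as [<-|Hi]; [lra|]. apply IH. intros j Hj; apply Hl; right; exact Hj. lra. exact Hi.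
Qed.

Lemma rsum_zero_each k f : (forall i, (i < k)%nat -> 0 <= f i) -> rsum k f <= 0 ->
  forall i, (i < k)%nat -> f i = 0.
Proof.
  intros H Hs i Hi. apply (list_zero_each f (seq 0 k)); auto.
  intros j Hj; apply in_seq in Hj; apply H; lia. apply in_seq; lia.
Qed.

Lemma hform_nonneg n m p g Rb eta beta z : 0 <= peval (n + m + 3) (hform n m p g Rb eta beta) z.
Proof.
  rewrite peval_hform. set (d := dd n m p g).
  assert (0 <= rsum m (fun j => (peval (n + m + 3) (homog n (n + m + 2) (2 * d) (g j)) z - z (n + S j)%nat ^ 2 * z (n + m + 2)%nat ^ (2 * d - 2)) ^ 2)).
  { apply rsum_nonneg. intros. apply pow2_ge_0. }
  pose proof (pow2_ge_0 (peval (n + m + 3) (homog n (n + m + 2) (2 * d) p) z + z n ^ 2 * z (n + m + 2)%nat ^ (2 * d - 2))).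
  match goal with |- 0 <= _ + _ + ?X => assert (0 <= X) by apply pow2_ge_0 end.
  lra.
Qed.

Lemma pow_even_nonneg y k : 0 <= y ^ (2 * k).
Proof. rewrite pow_mult. apply pow_le, pow2_ge_0. Qed.
Lemma pow_even_pos y k : y <> 0 -> 0 < y ^ (2 * k).
Proof. intros H. rewrite pow_mult. apply pow_lt. pose proof (pow2_ge_0 y). pose proof (pow_nonzero y 2 H). lra. Qed.
Lemma pow_zero_inv x k : x ^ k = 0 -> x = 0.
Proof. intros H. destruct (Req_dec x 0); auto. exfalso. apply (pow_nonzero x k H0 H). Qed.

Lemma hform_posdef n m p g Rb eta beta :
  (forall x, inS n m g x -> 0 < peval n p x) ->
  forall z, (exists i, (i < n + m + 3)%nat /\ z i <> 0) ->
  0 < peval (n + m + 3) (hform n m p g Rb eta beta) z.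
Proof.
  intros Hpos z [i0 [Hi0 Hz0]].
  pose proof (hform_nonneg n m p g Rb eta beta z) as Hnn.
  destruct (Rle_lt_or_eq_dec _ _ Hnn) as [|Heq]; auto. exfalso.
  rewrite peval_hform in Heq. pose proof (dd_ge1 n m p g) as Hd.
  set (d := dd n m p g) in *. set (N := (n + m + 3)%nat) in *. set (yi := (n + m + 2)%nat) in *.
  set (T0 := (peval N (homog n yi (2 * d) p) z + z n ^ 2 * z yi ^ (2 * d - 2)) ^ 2) in *.
  set (Tg := rsum m (fun j => (peval N (homog n yi (2 * d) (g j)) z - z (n + S j)%nat ^ 2 * z yi ^ (2 * d - 2)) ^ 2)) in *.
  set (X := rsum n (fun i => z i ^ 2) + rsum (S m) (fun j => z (n + j)%nat ^ 2)) in *.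
  set (TL := (cc m Rb eta beta ^ d * z yi ^ (2 * d) - X ^ d - z (n + S m)%nat ^ (2 * d)) ^ 2) in *.
  assert (H0 : 0 <= T0) by apply pow2_ge_0.
  assert (H1 : 0 <= Tg) by (apply rsum_nonneg; intros; apply pow2_ge_0).
  assert (H2 : 0 <= TL) by apply pow2_ge_0.
  assert (HT0 : T0 = 0) by lra. assert (HTg : Tg = 0) by lra. assert (HTL : TL = 0) by lra.
  destruct (Req_dec (z yi) 0) as [Hy|Hy].
  - unfold TL in HTL. apply pow_zero_inv in HTL. rewrite Hy, pow_i in HTL by lia.
    assert (HX : 0 <= X).
    { unfold X. pose proof (rsum_nonneg n (fun i => z i ^ 2) ltac:(intros; apply pow2_ge_0)).
      pose proof (rsum_nonneg (S m) (fun j => z (n + j)%nat ^ 2) ltac:(intros; apply pow2_ge_0)). lra. }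
    pose proof (pow_le X d HX). pose proof (pow_even_nonneg (z (n + S m)%nat) d).
    assert (HXd : X ^ d = 0) by lra. assert (Hs : z (n + S m)%nat ^ (2 * d) = 0) by lra.
    apply pow_zero_inv in HXd. apply pow_zero_inv in Hs.
    assert (Ha : rsum n (fun i => z i ^ 2) = 0).
    { pose proof (rsum_nonneg n (fun i => z i ^ 2) ltac:(intros; apply pow2_ge_0)).
      pose proof (rsum_nonneg (S m) (fun j => z (n + j)%nat ^ 2) ltac:(intros; apply pow2_ge_0)). unfold X in HXd. lra. }
    assert (Hb : rsum (S m) (fun j => z (n + j)%nat ^ 2) = 0).
    { pose proof (rsum_nonneg n (fun i => z i ^ 2) ltac:(intros; apply pow2_ge_0)). unfold X in HXd. lra. }
    apply Hz0.
    destruct (Nat.lt_ge_cases i0 n) as [Hl|Hl].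
    + apply (pow_zero_inv _ 2). apply (rsum_zero_each n (fun i => z i ^ 2)); auto; [intros; apply pow2_ge_0|lra].
    + destruct (Nat.le_gt_cases i0 (n + m)) as [Hl2|Hl2].
      * replace i0 with (n + (i0 - n))%nat by lia. apply (pow_zero_inv _ 2).
        apply (rsum_zero_each (S m) (fun j => z (n + j)%nat ^ 2)); [intros; apply pow2_ge_0|lra|lia].
      * assert (i0 = n + S m \/ i0 = yi)%nat as [->| ->] by (unfold yi, N in *; lia); auto.
  - set (xs := fun i => z i / z yi).
    assert (Hyp : 0 < z yi ^ (2 * d)) by (apply pow_even_pos; auto).
    assert (Hyq : 0 <= z yi ^ (2 * d - 2)).
    { replace (2 * d - 2)%nat with (2 * (d - 1))%nat by lia. apply pow_even_nonneg. }
    assert (HS : inS n m g xs).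
    { intros j Hj. pose proof (rsum_zero_each m _ ltac:(intros; apply pow2_ge_0) (Req_le _ _ HTg) j Hj) as Hz.
      cbv beta in Hz. apply pow_zero_inv in Hz.
      rewrite peval_homog_y in Hz; try (unfold yi, N; lia); auto.
      2:{ intros a Ha. apply (supp_g n m p g j a Hj Ha). }
      fold xs in Hz. pose proof (pow2_ge_0 (z (n + S j)%nat)).
      assert (0 <= z (n + S j)%nat ^ 2 * z yi ^ (2 * d - 2)) by (apply Rmult_le_pos; auto).
      destruct (Rle_lt_dec 0 (peval n (g j) xs)) as [|Hneg]; auto. exfalso.
      assert (z yi ^ (2 * d) * peval n (g j) xs < 0).
      { rewrite Rmult_comm. apply Rmult_neg_pos; auto. } lra. }
    specialize (Hpos xs HS).
    unfold T0 in HT0. apply pow_zero_inv in HT0.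
    rewrite peval_homog_y in HT0; try (unfold yi, N; lia); auto.
    2:{ intros a Ha. apply (supp_p n m p g a Ha). }
    fold xs in HT0. pose proof (pow2_ge_0 (z n)).
    assert (0 <= z n ^ 2 * z yi ^ (2 * d - 2)) by (apply Rmult_le_pos; auto).
    assert (0 < z yi ^ (2 * d) * peval n p xs) by (apply Rmult_lt_0_compat; auto). lra.
Qed.

Lemma inv_small eps : 0 < eps -> exists N, forall j, (j >= N)%nat -> / (INR j + 1) < eps.
Proof.
  intros He. destruct (archimed_cor1 eps He) as [N [H1 H2]]. exists N. intros j Hj.
  apply Rle_lt_trans with (/ INR N); auto. apply Rinv_le_contravar.
  - apply lt_0_INR; lia.
  - apply le_INR in Hj. lra.
Qed.

Lemma adh_sub (u : nat -> R) l : ValAdh u l ->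
  exists phi : nat -> nat, (forall j, (phi j < phi (S j))%nat) /\ Un_cv (fun j => u (phi j)) l.
Proof.
  intros H.
  assert (Hex : forall N j : nat, exists p, (N <= p)%nat /\ Rabs (u p - l) < / (INR j + 1)).
  { intros N j. assert (Hpos : 0 < / (INR j + 1)).
    { apply Rinv_0_lt_compat. pose proof (pos_INR j). lra. }
    destruct (H (disc l (mkposreal _ Hpos)) N) as [p [Hp1 Hp2]].
    - exists (mkposreal _ Hpos). intros y Hy. exact Hy.
    - exists p. split; auto. }
  set (F := fun N j => proj1_sig (constructive_indefinite_description _ (Hex N j))).
  assert (HF : forall N j, (N <= F N j)%nat /\ Rabs (u (F N j) - l) < / (INR j + 1)).
  { intros N j. unfold F. destruct (constructive_indefinite_description _ (Hex N j)); auto. }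
  set (phi := fix phi j := match j with O => F O O | S j' => F (S (phi j')) (S j') end).
  exists phi. split.
  - intros j. simpl. destruct (HF (S (phi j)) (S j)). lia.
  - intros eps He. destruct (inv_small eps He) as [N HN]. exists N. intros j Hj.
    unfold Rdist. assert (Rabs (u (phi j) - l) < / (INR j + 1)).
    { destruct j; simpl; apply HF. }
    specialize (HN j Hj). lra.
Qed.

Lemma incr_ge (phi : nat -> nat) : (forall j, (phi j < phi (S j))%nat) -> forall j, (j <= phi j)%nat.
Proof. intros H j. induction j; [lia|]. specialize (H j). lia. Qed.

Lemma incr_mono (phi : nat -> nat) : (forall j, (phi j < phi (S j))%nat) ->
  forall a b, (a <= b)%nat -> (phi a <= phi b)%nat.
Proof. intros H a b Hab. induction Hab; auto. specialize (H m). lia. Qed.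

Lemma cv_sub (a : nat -> R) l (psi : nat -> nat) : (forall j, (psi j < psi (S j))%nat) ->
  Un_cv a l -> Un_cv (fun j => a (psi j)) l.
Proof.
  intros Hp Ha eps He. destruct (Ha eps He) as [N HN]. exists N. intros j Hj.
  apply HN. pose proof (incr_ge psi Hp j). lia.
Qed.

Lemma bw1 (u : nat -> R) : (forall j, -1 <= u j <= 1) ->
  exists phi l, (forall j, (phi j < phi (S j))%nat) /\ Un_cv (fun j => u (phi j)) l.
Proof.
  intros H. destruct (Bolzano_Weierstrass u (fun c => -1 <= c <= 1) (compact_P3 (-1) 1) H) as [l Hl].
  destruct (adh_sub u l Hl) as [phi Hphi]. exists phi, l. auto.
Qed.

Lemma bwk k (u : nat -> nat -> R) : (forall j i, -1 <= u j i <= 1) ->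
  exists (phi : nat -> nat) (l : nat -> R), (forall j, (phi j < phi (S j))%nat) /\
     forall i, (i < k)%nat -> Un_cv (fun j => u (phi j) i) (l i).
Proof.
  intros H. induction k as [|k IH].
  - exists (fun j => j), (fun _ => 0). split; [intros; lia| intros; lia].
  - destruct IH as [phi [l [Hp Hl]]].
    destruct (bw1 (fun j => u (phi j) k) (fun j => H (phi j) k)) as [psi [lk [Hq Hk]]].
    exists (fun j => phi (psi j)), (fun i => if Nat.eqb i k then lk else l i). split.
    + intros j. specialize (Hq j). apply (incr_mono phi Hp) in Hq. specialize (Hp (psi j)). lia.
    + intros i Hi. destruct (Nat.eqb i k) eqn:E.
      * apply Nat.eqb_eq in E; subst. auto.
      * apply Nat.eqb_neq in E. apply (cv_sub (fun j => u (phi j) i)); auto. apply Hl. lia.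
Qed.

Lemma cv_const c : Un_cv (fun _ => c) c.
Proof. intros eps He. exists O. intros. unfold Rdist. rewrite Rminus_diag, Rabs_R0. lra. Qed.

Lemma cv_pow (a : nat -> R) l e : Un_cv a l -> Un_cv (fun j => a j ^ e) (l ^ e).
Proof. intros H. induction e; simpl; [apply cv_const| apply CV_mult; auto]. Qed.

Lemma peval_cv k P (x : nat -> nat -> R) (l : nat -> R) :
  (forall i, (i < k)%nat -> Un_cv (fun j => x j i) (l i)) ->
  Un_cv (fun j => peval k P (x j)) (peval k P l).
Proof.
  intros H. induction P as [|t P IH].
  - unfold peval; simpl. apply cv_const.
  - unfold peval in *. simpl. apply CV_plus; auto. apply CV_mult; [apply cv_const|].
    unfold rprod. assert (Hl : forall i, In i (seq 0 k) -> (i < k)%nat) by (intros i Hi; apply in_seq in Hi; lia).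
    induction (seq 0 k) as [|i s IHs]; simpl; [apply cv_const|].
    apply CV_mult; [apply cv_pow, H, Hl; left; auto| apply IHs; intros; apply Hl; right; auto].
Qed.

Lemma cv_le_0 (a : nat -> R) l : Un_cv a l -> (forall j, a j < / (INR j + 1)) -> l <= 0.
Proof.
  intros Ha Hb. destruct (Rle_lt_dec l 0) as [|Hl]; auto. exfalso.
  destruct (Ha (l / 2) ltac:(lra)) as [N1 HN1]. destruct (inv_small (l / 2) ltac:(lra)) as [N2 HN2].
  specialize (HN1 (N1 + N2)%nat ltac:(lia)). specialize (HN2 (N1 + N2)%nat ltac:(lia)).
  specialize (Hb (N1 + N2)%nat). unfold Rdist in HN1. apply Rabs_def2 in HN1. lra.
Qed.

Lemma rsum_scal k c f : rsum k (fun i => c * f i) = c * rsum k f.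
Proof. unfold rsum. induction (seq 0 k); simpl; [ring|]. rewrite IHl. ring. Qed.

Lemma list_sum_nonneg (f : nat -> R) l : (forall j, In j l -> 0 <= f j) -> 0 <= fold_right Rplus 0 (map f l).
Proof.
  induction l as [|a l IH]; intros Hl; simpl; [lra|].
  assert (0 <= f a) by (apply Hl; left; auto).
  assert (0 <= fold_right Rplus 0 (map f l)) by (apply IH; intros; apply Hl; right; auto). lra.
Qed.

Lemma list_ge_term (f : nat -> R) l i : (forall j, In j l -> 0 <= f j) -> In i l ->
  f i <= fold_right Rplus 0 (map f l).
Proof.
  induction l as [|a l IH]; intros Hl Hi; simpl in *; [tauto|].
  assert (0 <= f a) by (apply Hl; left; auto).
  assert (0 <= fold_right Rplus 0 (map f l)) by (apply list_sum_nonneg; intros; apply Hl; right; auto).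
  destruct Hi as [<-|Hi]; [lra|].
  assert (f i <= fold_right Rplus 0 (map f l)) by (apply IH; auto; intros; apply Hl; right; auto). lra.
Qed.

Lemma rsum_ge_term k f i : (forall j, (j < k)%nat -> 0 <= f j) -> (i < k)%nat -> f i <= rsum k f.
Proof.
  intros H Hi. apply list_ge_term. intros j Hj; apply in_seq in Hj; apply H; lia. apply in_seq; lia.
Qed.

Lemma cv_rsum k (f : nat -> nat -> R) g : (forall i, (i < k)%nat -> Un_cv (fun j => f j i) (g i)) ->
  Un_cv (fun j => rsum k (f j)) (rsum k g).
Proof.
  intros H. unfold rsum. assert (Hl : forall i, In i (seq 0 k) -> (i < k)%nat) by (intros i Hi; apply in_seq in Hi; lia).
  induction (seq 0 k) as [|i s IH]; simpl; [apply cv_const|].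
  apply CV_plus; [apply H, Hl; left; auto| apply IH; intros; apply Hl; right; auto].
Qed.

Definition nrm (k : nat) (z : nat -> R) : R := sqrt (rsum k (fun i => z i ^ 2)).

Lemma rsum_sq_nonneg k z : 0 <= rsum k (fun i => z i ^ 2).
Proof. apply rsum_nonneg. intros; apply pow2_ge_0. Qed.

Lemma compact_lower k D P : (0 < D)%nat -> Hom k D P ->
  (forall z, (exists i, (i < k)%nat /\ z i <> 0) -> 0 < peval k P z) ->
  exists c, 0 < c /\ forall z, c * nrm k z ^ D <= peval k P z.
Proof.
  intros HD HH Hpd. apply NNPP. intros Hno.
  assert (Hex : forall j : nat, exists z, peval k P z < / (INR j + 1) * nrm k z ^ D).
  { intros j. apply NNPP. intros Hn. apply Hno. exists (/ (INR j + 1)). split.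
    - apply Rinv_0_lt_compat. pose proof (pos_INR j). lra.
    - intros z. apply Rnot_lt_le. intros Hlt. apply Hn. exists z. auto. }
  set (zs := fun j => proj1_sig (constructive_indefinite_description _ (Hex j))).
  assert (Hzs : forall j, peval k P (zs j) < / (INR j + 1) * nrm k (zs j) ^ D).
  { intros j. unfold zs. destruct (constructive_indefinite_description _ (Hex j)); auto. }
  assert (Hnz : forall j, 0 < nrm k (zs j)).
  { intros j. unfold nrm. destruct (Rle_lt_dec (rsum k (fun i => zs j i ^ 2)) 0) as [Hle|Hlt].
    2: apply sqrt_lt_R0; auto.
    exfalso. specialize (Hzs j). unfold nrm in Hzs.
    assert (Hs : rsum k (fun i => zs j i ^ 2) = 0) by (pose proof (rsum_sq_nonneg k (zs j)); lra).
    rewrite Hs, sqrt_0, pow_i in Hzs by lia.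
    assert (Hz : peval k P (zs j) = 0).
    { rewrite (peval_ext k P (zs j) (fun i => 0 * zs j i)).
      - rewrite (peval_scale k D P 0 (zs j) HH), pow_i by lia. ring.
      - intros i Hi. assert (zs j i ^ 2 = 0).
        { apply (rsum_zero_each k (fun i => zs j i ^ 2)); [intros; apply pow2_ge_0| lra| auto]. }
        apply pow_zero_inv in H. rewrite H. ring. }
    lra. }
  set (u := fun j i => if Nat.ltb i k then / nrm k (zs j) * zs j i else 0).
  assert (Hu1 : forall j, rsum k (fun i => u j i ^ 2) = 1).
  { intros j. unfold u. rewrite (rsum_ext_in k _ (fun i => (/ nrm k (zs j)) ^ 2 * zs j i ^ 2)).
    2:{ intros i Hi. destruct (Nat.ltb i k) eqn:E; [ring|]. apply Nat.ltb_ge in E; lia. }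
    rewrite rsum_scal. specialize (Hnz j). unfold nrm in *.
    rewrite pow_inv by lra. rewrite pow2_sqrt by apply rsum_sq_nonneg.
    field. intros Hc. rewrite Hc, sqrt_0 in Hnz. lra. }
  assert (Hub : forall j i, -1 <= u j i <= 1).
  { intros j i. destruct (Nat.lt_ge_cases i k) as [Hi|Hi].
    - pose proof (rsum_ge_term k (fun i => u j i ^ 2) i ltac:(intros; apply pow2_ge_0) Hi).
      rewrite Hu1 in H. cbv beta in H. split; nra.
    - unfold u. destruct (Nat.ltb i k) eqn:E; [apply Nat.ltb_lt in E; lia| lra]. }
  destruct (bwk k u Hub) as [phi [l [Hp Hl]]].
  assert (Hpe : forall j, peval k P (u j) < / (INR j + 1)).
  { intros j. rewrite (peval_ext k P (u j) (fun i => / nrm k (zs j) * zs j i)).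
    2:{ intros i Hi. unfold u. destruct (Nat.ltb i k) eqn:E; auto. apply Nat.ltb_ge in E; lia. }
    rewrite (peval_scale k D P _ _ HH). specialize (Hzs j). specialize (Hnz j).
    assert (Hq : 0 < (/ nrm k (zs j)) ^ D) by (apply pow_lt, Rinv_0_lt_compat; auto).
    apply Rmult_lt_compat_l with (r := (/ nrm k (zs j)) ^ D) in Hzs; auto.
    replace ((/ nrm k (zs j)) ^ D * (/ (INR j + 1) * nrm k (zs j) ^ D)) with (/ (INR j + 1)) in Hzs.
    exact Hzs.
    rewrite pow_inv. pose proof (pos_INR j). field. split; [lra| apply pow_nonzero; lra]. }
  pose proof (peval_cv k P (fun j => u (phi j)) l Hl) as Hcv.
  assert (Hle : peval k P l <= 0).
  { apply (cv_le_0 _ _ Hcv). intros j. eapply Rlt_le_trans; [apply Hpe|].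
    apply Rinv_le_contravar. pose proof (pos_INR j); lra.
    apply Rplus_le_compat_r, le_INR, incr_ge; auto. }
  assert (Hn1 : rsum k (fun i => l i ^ 2) = 1).
  { assert (H1 : Un_cv (fun j => rsum k (fun i => u (phi j) i ^ 2)) (rsum k (fun i => l i ^ 2))).
    { apply (cv_rsum k (fun j i => u (phi j) i ^ 2)). intros i Hi. apply cv_pow, Hl; auto. }
    assert (H2 : Un_cv (fun j => rsum k (fun i => u (phi j) i ^ 2)) 1).
    { intros eps He. destruct (cv_const 1 eps He) as [N HN]. exists N. intros j Hj. rewrite Hu1. apply (HN j); auto. }
    apply (UL_sequence _ _ _ H1 H2). }
  assert (Hnz' : exists i, (i < k)%nat /\ l i <> 0).
  { apply NNPP. intros Hc. assert (rsum k (fun i => l i ^ 2) = 0); [|lra].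
    rewrite (rsum_ext_in k _ (fun _ => 0)). unfold rsum. induction (seq 0 k); simpl; auto; lra.
    intros i Hi. destruct (Req_dec (l i) 0) as [E|E]. rewrite E; ring. exfalso; apply Hc; exists i; auto. }
  specialize (Hpd l Hnz'). lra.
Qed.

Definition leb_k (k : nat) (b a : mono) : bool := forallb (fun i => Nat.leb (b i) (a i)) (seq 0 k).
Definition msub (a b : mono) : mono := fun i => (a i - b i)%nat.

Lemma leb_k_spec k b a : leb_k k b a = true <-> (forall i, (i < k)%nat -> (b i <= a i)%nat).
Proof.
  unfold leb_k. rewrite forallb_forall. split.
  - intros H i Hi. apply Nat.leb_le. apply H. apply in_seq. lia.
  - intros H i Hi. apply in_seq in Hi. apply Nat.leb_le. apply H. lia.
Qed.

Lemma coef_pmul_sub k P Q a :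
  coef k (pmul P Q) a = L (fun b => if leb_k k b a then coef k Q (msub a b) else 0) P.
Proof.
  rewrite coef_pmul. apply L_ext. intros b. destruct (leb_k k b a) eqn:E.
  - rewrite coef_L. apply L_ext. intros b'. unfold ind.
    rewrite leb_k_spec in E.
    destruct (mon_eqb k (madd b b') a) eqn:E1, (mon_eqb k b' (msub a b)) eqn:E2; auto; exfalso.
    + apply mon_eqb_spec in E1. assert (meq k b' (msub a b)).
      { intros i Hi. unfold msub. rewrite <- (E1 i Hi). unfold madd. lia. }
      apply mon_eqb_spec in H. congruence.
    + apply mon_eqb_spec in E2. assert (meq k (madd b b') a).
      { intros i Hi. unfold madd. rewrite (E2 i Hi). unfold msub. specialize (E i Hi). lia. }
      apply mon_eqb_spec in H. congruence.
  - rewrite (L_ext _ (fun _ => 0)). apply L_zerof. intros b'. unfold ind.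
    destruct (mon_eqb k (madd b b') a) eqn:E1; auto. exfalso.
    apply mon_eqb_spec in E1. assert (leb_k k b a = true); [|congruence].
    apply leb_k_spec. intros i Hi. rewrite <- (E1 i Hi). unfold madd. lia.
Qed.

Lemma seq_add_map s len : seq s len = map (fun i => (s + i)%nat) (seq 0 len).
Proof.
  revert s. induction len; intros s; simpl; auto. f_equal. lia.
  rewrite IHlen, <- seq_shift, map_map. apply map_ext. intros; lia.
Qed.

Lemma map_seq_shift {A} (f : nat -> A) s len : map f (seq s len) = map (fun i => f (s + i)%nat) (seq 0 len).
Proof. rewrite seq_add_map, map_map. reflexivity. Qed.

Lemma rsum_split N f : rsum (N + N) f = rsum N f + rsum N (fun i => f (N + i)%nat).
Proof.
  unfold rsum. rewrite seq_app, map_app, fold_right_app. simpl. rewrite (map_seq_shift f 0 N) at 1.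
  rewrite (map_seq_shift f N N). simpl.
  induction (map (fun i => f i) (seq 0 N)); simpl; [lra|]. rewrite IHl. lra.
Qed.

Definition dbl (i : nat) : mono := fun j => if Nat.eqb j i then 2%nat else 0%nat.

Lemma L_pvar2 f i : L f (ppow (pvar i) 2) = f (dbl i).
Proof.
  simpl. unfold L. simpl. replace (fun i0 : nat => ((if Nat.eqb i0 i then 1 else 0) + ((if Nat.eqb i0 i then 1 else 0) + 0))%nat) with (dbl i).
  ring. apply functional_extensionality. intros j. unfold dbl. destruct (Nat.eqb j i); lia.
Qed.

Definition SS (N : nat) : mpoly :=
  padd (psum N (fun i => ppow (pvar i) 2)) (psum N (fun i => ppow (pvar (N + i)) 2)).

Lemma L_SS f N : L f (SS N) = rsum (N + N) (fun i => f (dbl i)).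
Proof.
  unfold SS. rewrite L_padd, !L_psum, rsum_split. f_equal; unfold rsum; f_equal; apply map_ext; intros; apply L_pvar2.
Qed.

Definition evb (k : nat) (c : mono) : bool := forallb (fun i => Nat.even (c i)) (seq 0 k).
Definition pf (k : nat) (c : mono) : R := rprod k (fun i => INR (fact (c i / 2))).
Definition wf (k M : nat) (c : mono) : R :=
  if andb (evb k c) (Nat.eqb (mdeg k c) (2 * M)) then INR (fact M) / pf k c else 0.

Lemma evb_spec k c : evb k c = true <-> (forall i, (i < k)%nat -> Nat.even (c i) = true).
Proof.
  unfold evb. rewrite forallb_forall. split.
  - intros H i Hi. apply H, in_seq; lia.
  - intros H i Hi. apply in_seq in Hi. apply H; lia.
Qed.

Lemma half_double w : (2 * w / 2 = w)%nat.
Proof. rewrite Nat.mul_comm. apply Nat.div_mul. lia. Qed.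

Lemma even_ex x : Nat.even x = true -> exists w, x = (2 * w)%nat.
Proof. intros H. apply Nat.even_spec in H. destruct H as [w Hw]. exists w. lia. Qed.

Lemma mdeg_msub_l (l : list nat) (a b : mono) : (forall i, In i l -> (b i <= a i)%nat) ->
  fold_right Nat.add 0%nat (map (msub a b) l) =
  (fold_right Nat.add 0%nat (map a l) - fold_right Nat.add 0%nat (map b l))%nat /\
  (fold_right Nat.add 0%nat (map b l) <= fold_right Nat.add 0%nat (map a l))%nat.
Proof.
  induction l as [|x l IH]; intros H; simpl; [lia|].
  destruct IH as [IH1 IH2]. intros; apply H; right; auto.
  assert (b x <= a x)%nat by (apply H; left; auto). unfold msub at 1. lia.
Qed.

Lemma mdeg_msub k a b : (forall i, (i < k)%nat -> (b i <= a i)%nat) ->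
  mdeg k (msub a b) = (mdeg k a - mdeg k b)%nat /\ (mdeg k b <= mdeg k a)%nat.
Proof. intros H. apply mdeg_msub_l. intros i Hi; apply in_seq in Hi; apply H; lia. Qed.

Lemma mdeg_dbl k i : (i < k)%nat -> mdeg k (dbl i) = 2%nat.
Proof.
  intros Hi. unfold mdeg, dbl. rewrite fold_ind_v by apply seq_NoDup.
  destruct (existsb (Nat.eqb i) (seq 0 k)) eqn:E; auto.
  exfalso. assert (existsb (Nat.eqb i) (seq 0 k) = true); [|congruence].
  apply existsb_exists. exists i. split; [apply in_seq; lia| apply Nat.eqb_refl].
Qed.

Lemma prodl_point l f i : In i l -> NoDup l ->
  prodl l f = f i * prodl l (fun j => if Nat.eqb j i then 1 else f j).
Proof.
  unfold prodl. induction l as [|x l IH]; intros Hi Hnd; [destruct Hi|]. inversion Hnd; subst. simpl.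
  destruct Hi as [<-|Hi].
  - rewrite Nat.eqb_refl. f_equal. ring_simplify. f_equal. apply map_ext_in. intros j Hj.
    destruct (Nat.eqb j x) eqn:E; auto. apply Nat.eqb_eq in E; subst; contradiction.
  - destruct (Nat.eqb x i) eqn:E. { apply Nat.eqb_eq in E; subst; contradiction. }
    rewrite IH by auto. ring.
Qed.

Lemma pf_pos k c : 0 < pf k c.
Proof.
  unfold pf, rprod. induction (seq 0 k); simpl; [lra|]. apply Rmult_lt_0_compat; auto.
  apply lt_0_INR. apply lt_O_fact.
Qed.

Lemma pf_step k c i : (i < k)%nat -> (2 <= c i)%nat -> Nat.even (c i) = true ->
  pf k c = INR (c i / 2) * pf k (msub c (dbl i)).
Proof.
  intros Hi H2 He. unfold pf, rprod.
  fold (prodl (seq 0 k) (fun j => INR (fact (c j / 2)))).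
  fold (prodl (seq 0 k) (fun j => INR (fact (msub c (dbl i) j / 2)))).
  assert (Hin : In i (seq 0 k)) by (apply in_seq; lia).
  set (R0 := prodl (seq 0 k) (fun j => if Nat.eqb j i then 1 else INR (fact (c j / 2)))).
  assert (HA : prodl (seq 0 k) (fun j => INR (fact (c j / 2))) = INR (fact (c i / 2)) * R0).
  { unfold R0. apply (prodl_point _ (fun j => INR (fact (c j / 2))) i Hin (seq_NoDup _ _)). }
  assert (HB : prodl (seq 0 k) (fun j => INR (fact (msub c (dbl i) j / 2))) = INR (fact ((c i - 2) / 2)) * R0).
  { rewrite (prodl_point _ _ i Hin (seq_NoDup _ _)). unfold msub at 1, dbl at 1. rewrite Nat.eqb_refl. f_equal.
    apply prodl_ext_in. intros j _. destruct (Nat.eqb j i) eqn:E; auto. unfold msub, dbl. rewrite E.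
    rewrite Nat.sub_0_r. auto. }
  rewrite HA, HB. destruct (even_ex _ He) as [w Hw]. rewrite Hw.
  rewrite half_double. replace (2 * w - 2)%nat with (2 * (w - 1))%nat by lia. rewrite half_double.
  replace w with (S (w - 1)) at 1 2 by lia. rewrite fact_simpl, mult_INR.
  ring.
Qed.

Lemma fold_zero_iff (l : list nat) (c : mono) :
  fold_right Nat.add 0%nat (map c l) = 0%nat <-> (forall i, In i l -> c i = 0%nat).
Proof.
  induction l as [|x l IH]; simpl; split; intros H.
  - tauto.
  - auto.
  - intros i [<-|Hi]; [lia|]. apply IH; auto; lia.
  - rewrite (H x (or_introl eq_refl)). rewrite (proj2 IH); auto.
Qed.

Lemma mdeg_zero_iff k c : mdeg k c = 0%nat <-> (forall i, (i < k)%nat -> c i = 0%nat).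
Proof.
  unfold mdeg. rewrite fold_zero_iff. split; intros H i Hi.
  - apply H, in_seq; lia.
  - apply in_seq in Hi. apply H; lia.
Qed.

Lemma rsum_INR k f : rsum k (fun i => INR (f i)) = INR (fold_right Nat.add 0%nat (map f (seq 0 k))).
Proof. unfold rsum. induction (seq 0 k); simpl; auto. rewrite IHl, plus_INR. auto. Qed.

Lemma fold_half (l : list nat) (c : mono) : (forall i, In i l -> Nat.even (c i) = true) ->
  (2 * fold_right Nat.add 0%nat (map (fun i => c i / 2) l) = fold_right Nat.add 0%nat (map c l))%nat.
Proof.
  induction l as [|x l IH]; intros H; cbn [map fold_right]; auto.
  destruct (even_ex (c x) (H x (or_introl eq_refl))) as [w Hw]. rewrite Hw. rewrite half_double.
  rewrite <- IH by (intros; apply H; right; auto). lia.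
Qed.

Lemma leb_dbl k i c : (i < k)%nat -> leb_k k (dbl i) c = Nat.leb 2 (c i).
Proof.
  intros Hi. destruct (Nat.leb 2 (c i)) eqn:E.
  - apply leb_k_spec. intros j Hj. unfold dbl. destruct (Nat.eqb j i) eqn:E2; [|lia].
    apply Nat.eqb_eq in E2; subst. apply Nat.leb_le; auto.
  - destruct (leb_k k (dbl i) c) eqn:E2; auto. rewrite leb_k_spec in E2. specialize (E2 i Hi).
    unfold dbl in E2. rewrite Nat.eqb_refl in E2. apply Nat.leb_gt in E. lia.
Qed.

Lemma coef_SS_pow N M c : coef (N + N) (ppow (SS N) M) c = wf (N + N) M c.
Proof.
  set (k := (N + N)%nat). revert c. induction M as [|M IH]; intros c.
  - simpl ppow. unfold coef, pconst. simpl filter. unfold wf.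
    destruct (mon_eqb k (fun _ => 0%nat) c) eqn:E.
    + apply mon_eqb_spec in E.
      assert (Hc : forall i, (i < k)%nat -> c i = 0%nat) by (intros i Hi; rewrite <- E; auto).
      assert (evb k c = true) by (apply evb_spec; intros i Hi; rewrite Hc; auto).
      assert (mdeg k c = 0%nat) by (apply mdeg_zero_iff; auto).
      rewrite H, H0. simpl.
      unfold pf.
      replace (rprod k (fun i => INR (fact (c i / 2)))) with 1. field.
      unfold rprod. fold (prodl (seq 0 k) (fun i => INR (fact (c i / 2)))).
      rewrite <- (prodl_one (seq 0 k)). apply prodl_ext_in. intros i Hi. apply in_seq in Hi.
      rewrite Hc by lia. simpl. auto.
    + simpl. destruct (andb (evb k c) (Nat.eqb (mdeg k c) 0)) eqn:E2; auto.
      exfalso. apply andb_prop in E2. destruct E2 as [_ E2]. apply Nat.eqb_eq in E2.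
      assert (mon_eqb k (fun _ => 0%nat) c = true); [|congruence].
      apply mon_eqb_spec. intros i Hi. symmetry. apply (proj1 (mdeg_zero_iff k c)); [rewrite E2; reflexivity | exact Hi].
  - change (ppow (SS N) (S M)) with (pmul (SS N) (ppow (SS N) M)).
    rewrite coef_pmul_sub. rewrite (L_ext _ (fun b => if leb_k k b c then wf k M (msub c b) else 0)).
    2:{ intros b. destruct (leb_k k b c); auto. }
    unfold k at 3. rewrite L_SS. fold k.
    rewrite (rsum_ext_in k _ (fun i => if Nat.leb 2 (c i) then wf k M (msub c (dbl i)) else 0)).
    2:{ intros i Hi. rewrite leb_dbl; auto. }
    unfold wf at 2. destruct (andb (evb k c) (Nat.eqb (mdeg k c) (2 * S M))) eqn:E.
    + apply andb_prop in E. destruct E as [Ev Em]. apply Nat.eqb_eq in Em. rewrite evb_spec in Ev.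
      rewrite (rsum_ext_in k _ (fun i => INR (fact M) / pf k c * INR (c i / 2))).
      * rewrite rsum_scal, rsum_INR. unfold mdeg in Em.
        rewrite <- (fold_half (seq 0 k) c) in Em.
        2:{ intros i Hi. apply in_seq in Hi. apply Ev. lia. }
        assert (fold_right Nat.add 0%nat (map (fun i => (c i / 2)%nat) (seq 0 k)) = S M) as -> by lia.
        rewrite fact_simpl, mult_INR. pose proof (pf_pos k c). field. lra.
      * intros i Hi. destruct (Nat.leb 2 (c i)) eqn:E2.
        -- apply Nat.leb_le in E2. unfold wf.
           assert (Hle : forall j, (j < k)%nat -> (dbl i j <= c j)%nat).
           { intros j Hj. unfold dbl. destruct (Nat.eqb j i) eqn:E3; [apply Nat.eqb_eq in E3; subst|]; lia. }
           destruct (mdeg_msub k c (dbl i) Hle) as [Hmd _]. rewrite mdeg_dbl in Hmd by auto.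
           assert (evb k (msub c (dbl i)) = true).
           { apply evb_spec. intros j Hj. unfold msub, dbl. destruct (Nat.eqb j i) eqn:E3.
             - apply Nat.eqb_eq in E3; subst. destruct (even_ex _ (Ev i Hi)) as [w Hw]. rewrite Hw.
               replace (2 * w - 2)%nat with (2 * (w - 1))%nat by lia. apply Nat.even_spec. exists (w - 1)%nat. lia.
             - rewrite Nat.sub_0_r. apply Ev; auto. }
           rewrite H. replace (Nat.eqb (mdeg k (msub c (dbl i))) (2 * M)) with true by (symmetry; apply Nat.eqb_eq; lia).
           cbn [andb]. rewrite (pf_step k c i Hi E2 (Ev i Hi)).
           pose proof (pf_pos k (msub c (dbl i))). assert (0 < INR (c i / 2)).
           { apply lt_0_INR. destruct (even_ex _ (Ev i Hi)) as [w Hw]. rewrite Hw, half_double. lia. }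
           field. lra.
        -- apply Nat.leb_gt in E2. destruct (even_ex _ (Ev i Hi)) as [w Hw].
           assert (c i = 0%nat) as -> by lia. simpl. ring.
    + rewrite (rsum_ext_in k _ (fun _ => 0)). { unfold rsum. induction (seq 0 k); simpl; auto. lra. }
      intros i Hi. destruct (Nat.leb 2 (c i)) eqn:E2; auto. apply Nat.leb_le in E2. unfold wf.
      assert (Hle : forall j, (j < k)%nat -> (dbl i j <= c j)%nat).
      { intros j Hj. unfold dbl. destruct (Nat.eqb j i) eqn:E3; [apply Nat.eqb_eq in E3; subst|]; lia. }
      destruct (mdeg_msub k c (dbl i) Hle) as [Hmd Hmd2]. rewrite mdeg_dbl in Hmd, Hmd2 by auto.
      destruct (andb (evb k (msub c (dbl i))) (Nat.eqb (mdeg k (msub c (dbl i))) (2 * M))) eqn:E3; auto.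
      exfalso. apply andb_prop in E3. destruct E3 as [Ev Em]. apply Nat.eqb_eq in Em.
      rewrite evb_spec in Ev. apply Bool.andb_false_iff in E. destruct E as [E|E].
      * assert (evb k c = true); [|congruence]. apply evb_spec. intros j Hj. specialize (Ev j Hj).
        unfold msub, dbl in Ev. destruct (Nat.eqb j i) eqn:E4.
        -- apply Nat.eqb_eq in E4; subst. destruct (even_ex _ Ev) as [w Hw]. apply Nat.even_spec. exists (w + 1)%nat. lia.
        -- rewrite Nat.sub_0_r in Ev. auto.
      * apply Nat.eqb_neq in E. lia.
Qed.

Fixpoint ffr (n k : nat) : R :=
  match k with O => 1 | S k' => ffr n k' * (INR n - INR k') end.

Lemma ffr_zero n k : (n < k)%nat -> ffr n k = 0.
Proof.
  induction k; intros H; [lia|]. simpl. destruct (Nat.eq_dec k n) as [->|Hne].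
  - ring.
  - rewrite IHk by lia. ring.
Qed.

Lemma ffr_fact n k : (k <= n)%nat -> INR (fact n) = INR (fact (n - k)) * ffr n k.
Proof.
  induction k; intros H.
  - simpl. rewrite Nat.sub_0_r. ring.
  - rewrite IHk by lia. simpl ffr. replace (n - k)%nat with (S (n - S k)) by lia.
    rewrite fact_simpl, mult_INR. replace (INR (S (n - S k))) with (INR n - INR k).
    ring. rewrite S_INR, minus_INR by lia. rewrite S_INR. ring.
Qed.

Lemma ffr_bound n k T : INR n <= T -> INR k <= T -> Rabs (ffr n k) <= T ^ k.
Proof.
  intros Hn Hk. induction k; simpl; [rewrite Rabs_R1; lra|].
  rewrite Rabs_mult. rewrite S_INR in Hk. pose proof (pos_INR k). pose proof (pos_INR n).
  assert (Rabs (INR n - INR k) <= T) by (apply Rabs_le; split; lra).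
  rewrite Rmult_comm. apply Rmult_le_compat; auto using Rabs_pos. apply IHk. lra.
Qed.

Lemma ffr_close n k T D : 0 < T -> INR n <= T -> (k <= D)%nat -> INR D <= T ->
  Rabs (INR n ^ k - ffr n k) * T <= INR D * INR k * T ^ k.
Proof.
  intros HT Hn Hk HD. induction k.
  - simpl. rewrite Rminus_diag, Rabs_R0. lra.
  - assert (IH := IHk ltac:(lia)). simpl pow. simpl ffr.
    replace (INR n * INR n ^ k - ffr n k * (INR n - INR k)) with
      ((INR n ^ k - ffr n k) * INR n + ffr n k * INR k) by ring.
    pose proof (pos_INR n). pose proof (pos_INR k).
    assert (Hk' : INR k <= T) by (apply le_INR in Hk; rewrite S_INR in Hk; lra).
    assert (Hb : Rabs (ffr n k) <= T ^ k) by (apply ffr_bound; lra).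
    assert (HkD : INR k + 1 <= INR D) by (rewrite <- S_INR; apply le_INR; lia).
    eapply Rle_trans. { apply Rmult_le_compat_r; [lra| apply Rabs_triang]. }
    rewrite !Rabs_mult, (Rabs_right (INR n)), (Rabs_right (INR k)) by lra.
    assert (Tk : 0 <= T ^ k) by (apply pow_le; lra).
    assert (H1 : Rabs (INR n ^ k - ffr n k) * INR n * T <= INR D * INR k * T ^ k * T).
    { replace (Rabs (INR n ^ k - ffr n k) * INR n * T) with (Rabs (INR n ^ k - ffr n k) * T * INR n) by ring.
      apply Rmult_le_compat; auto. apply Rmult_le_pos; auto using Rabs_pos; lra. }
    assert (H2 : Rabs (ffr n k) * INR k * T <= T ^ k * INR D * T).
    { apply Rmult_le_compat_r; [lra|]. apply Rmult_le_compat; auto using Rabs_pos. lra. }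
    rewrite S_INR. nra.
Qed.

Lemma prodl_close (l : list nat) (g be : nat -> nat) T D : 0 < T -> INR D <= T ->
  (forall i, In i l -> INR (g i) <= T /\ (be i <= D)%nat) ->
  let E := fold_right Nat.add 0%nat (map be l) in
  Rabs (prodl l (fun i => INR (g i) ^ be i)) <= T ^ E /\
  Rabs (prodl l (fun i => ffr (g i) (be i))) <= T ^ E /\
  Rabs (prodl l (fun i => INR (g i) ^ be i) - prodl l (fun i => ffr (g i) (be i))) * T
    <= INR D * INR E * T ^ E.
Proof.
  intros HT HD H. induction l as [|x l IH]; intros E; unfold E; simpl.
  - unfold prodl; simpl. rewrite Rminus_diag, Rabs_R0, Rabs_R1. lra.
  - destruct IH as [I1 [I2 I3]]. intros; apply H; right; auto.
    destruct (H x (or_introl eq_refl)) as [Hg Hb].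
    unfold prodl in *; simpl.
    set (A := fold_right Rmult 1 (map (fun i => INR (g i) ^ be i) l)) in *.
    set (B := fold_right Rmult 1 (map (fun i => ffr (g i) (be i)) l)) in *.
    set (E' := fold_right Nat.add 0%nat (map be l)) in *.
    pose proof (pos_INR (g x)).
    assert (Ha : Rabs (INR (g x) ^ be x) <= T ^ be x).
    { rewrite <- RPow_abs. apply pow_incr. rewrite Rabs_right; lra. }
    assert (Hf : Rabs (ffr (g x) (be x)) <= T ^ be x).
    { apply ffr_bound; auto. apply le_INR in Hb. lra. }
    assert (Hc := ffr_close (g x) (be x) T D HT Hg Hb HD).
    assert (TE : 0 <= T ^ E') by (apply pow_le; lra). assert (Tb : 0 <= T ^ be x) by (apply pow_le; lra).
    rewrite pow_add. split; [|split].
    + rewrite Rabs_mult. apply Rmult_le_compat; auto using Rabs_pos.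
    + rewrite Rabs_mult. apply Rmult_le_compat; auto using Rabs_pos.
    + replace (INR (g x) ^ be x * A - ffr (g x) (be x) * B) with
        ((INR (g x) ^ be x - ffr (g x) (be x)) * A + ffr (g x) (be x) * (A - B)) by ring.
      eapply Rle_trans. { apply Rmult_le_compat_r; [lra| apply Rabs_triang]. }
      rewrite !Rabs_mult. rewrite plus_INR.
      assert (H1 : Rabs (INR (g x) ^ be x - ffr (g x) (be x)) * Rabs A * T <= INR D * INR (be x) * T ^ be x * T ^ E').
      { replace (Rabs (INR (g x) ^ be x - ffr (g x) (be x)) * Rabs A * T) with
          (Rabs (INR (g x) ^ be x - ffr (g x) (be x)) * T * Rabs A) by ring.
        apply Rmult_le_compat; auto using Rabs_pos. apply Rmult_le_pos; auto using Rabs_pos; lra. }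
      assert (H2 : Rabs (ffr (g x) (be x)) * Rabs (A - B) * T <= T ^ be x * (INR D * INR E' * T ^ E')).
      { rewrite Rmult_assoc. apply Rmult_le_compat; auto using Rabs_pos.
        apply Rmult_le_pos; auto using Rabs_pos; lra. }
      nra.
Qed.

Lemma evb_meq K c c' : meq K c c' -> evb K c = evb K c'.
Proof.
  intros H. destruct (evb K c) eqn:E1, (evb K c') eqn:E2; auto.
  - rewrite evb_spec in E1. assert (evb K c' = true); [|congruence]. apply evb_spec. intros i Hi. rewrite <- H; auto.
  - rewrite evb_spec in E2. assert (evb K c = true); [|congruence]. apply evb_spec. intros i Hi. rewrite H; auto.
Qed.

Lemma pf_meq K c c' : meq K c c' -> pf K c = pf K c'.
Proof. intros H. unfold pf, rprod. f_equal. apply map_ext_in. intros i Hi. apply in_seq in Hi. rewrite H; auto. lia. Qed.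

Lemma wf_meq K M c c' : meq K c c' -> wf K M c = wf K M c'.
Proof. intros H. unfold wf. rewrite (evb_meq K c c' H), (mdeg_meq K c c' H), (pf_meq K c c' H). auto. Qed.

Lemma leb_k_meq K b b' a : meq K b b' -> leb_k K b a = leb_k K b' a.
Proof.
  intros H. destruct (leb_k K b a) eqn:E1, (leb_k K b' a) eqn:E2; auto.
  - rewrite leb_k_spec in E1. assert (leb_k K b' a = true); [|congruence]. apply leb_k_spec. intros i Hi. rewrite <- H; auto.
  - rewrite leb_k_spec in E2. assert (leb_k K b a = true); [|congruence]. apply leb_k_spec. intros i Hi. rewrite H; auto.
Qed.

Lemma pf_msub K a b : evb K a = true -> (forall i, (i < K)%nat -> Nat.Even (b i)) ->
  (forall i, (i < K)%nat -> (b i <= a i)%nat) ->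
  pf K a = pf K (msub a b) * prodl (seq 0 K) (fun i => ffr (a i / 2) (b i / 2)).
Proof.
  intros Ea Eb Hle. rewrite evb_spec in Ea. unfold pf, rprod.
  fold (prodl (seq 0 K) (fun i => INR (fact (a i / 2)))).
  fold (prodl (seq 0 K) (fun i => INR (fact (msub a b i / 2)))).
  rewrite <- prodl_mul. apply prodl_ext_in. intros i Hi. apply in_seq in Hi.
  destruct (even_ex _ (Ea i ltac:(lia))) as [u Hu]. destruct (Eb i ltac:(lia)) as [v Hv].
  specialize (Hle i ltac:(lia)). unfold msub. rewrite Hu, Hv in *.
  replace (2 * u - 2 * v)%nat with (2 * (u - v))%nat by lia. rewrite !half_double.
  apply ffr_fact. lia.
Qed.

Lemma prodl_has_zero l f i : In i l -> f i = 0 -> prodl l f = 0.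
Proof. unfold prodl. induction l; simpl; [tauto|]. intros [<-|H] Hf. rewrite Hf; ring. rewrite IHl; auto. ring. Qed.

Lemma coef_cert_form N X M D2 : Ev (N + N) X -> Hom (N + N) D2 X -> forall a,
  coef (N + N) (pmul X (ppow (SS N) M)) a = 0 \/
  (evb (N + N) a = true /\ mdeg (N + N) a = (2 * M + D2)%nat /\
   coef (N + N) (pmul X (ppow (SS N) M)) a = INR (fact M) / pf (N + N) a *
     L (fun b => if Nat.eqb (mdeg (N + N) b) D2
                 then prodl (seq 0 (N + N)) (fun i => ffr (a i / 2) (b i / 2)) else 0) X).
Proof.
  set (K := (N + N)%nat). intros HE HH a.
  rewrite coef_pmul_sub.
  rewrite (L_ext _ (fun b => if leb_k K b a then wf K M (msub a b) else 0)).
  2:{ intros b. destruct (leb_k K b a); auto. apply coef_SS_pow. }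
  rewrite (Hom_L K D2 X); auto.
  2:{ intros b b' Hb. rewrite (leb_k_meq K b b' a Hb). destruct (leb_k K b' a); auto.
      apply wf_meq. intros i Hi. unfold msub. rewrite Hb; auto. }
  assert (Hwf : forall b, In b (map snd X) -> leb_k K b a = true -> wf K M (msub a b) <> 0 ->
            evb K a = true /\ mdeg K a = (2 * M + mdeg K b)%nat).
  { intros b Hb Hl Hw. apply in_map_iff in Hb. destruct Hb as [t [<- Ht]].
    rewrite leb_k_spec in Hl. unfold wf in Hw.
    destruct (andb (evb K (msub a (snd t))) (Nat.eqb (mdeg K (msub a (snd t))) (2 * M))) eqn:E; [|lra].
    apply andb_prop in E. destruct E as [E1 E2]. apply Nat.eqb_eq in E2. rewrite evb_spec in E1.
    destruct (mdeg_msub K a (snd t) Hl) as [Hm1 Hm2]. split; [|lia].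
    apply evb_spec. intros i Hi. specialize (E1 i Hi). destruct (even_ex _ E1) as [u Hu].
    destruct (HE t Ht i Hi) as [v Hv]. unfold msub in Hu. specialize (Hl i Hi).
    apply Nat.even_spec. exists (u + v)%nat. lia. }
  destruct (evb K a) eqn:Ea.
  2:{ left. rewrite (L_ext_in _ (fun _ => 0)). apply L_zerof. intros t Ht.
      destruct (Nat.eqb (mdeg K (snd t)) D2); auto. destruct (leb_k K (snd t) a) eqn:El; auto.
      destruct (Req_dec (wf K M (msub a (snd t))) 0); auto. exfalso.
      destruct (Hwf (snd t) ltac:(apply in_map; auto) El H). congruence. }
  destruct (Nat.eq_dec (mdeg K a) (2 * M + D2)%nat) as [Hd|Hd].
  2:{ left. rewrite (L_ext_in _ (fun _ => 0)). apply L_zerof. intros t Ht.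
      destruct (Nat.eqb (mdeg K (snd t)) D2) eqn:E0; auto. apply Nat.eqb_eq in E0.
      destruct (leb_k K (snd t) a) eqn:El; auto.
      destruct (Req_dec (wf K M (msub a (snd t))) 0); auto. exfalso.
      destruct (Hwf (snd t) ltac:(apply in_map; auto) El H). lia. }
  right. split; auto. split; auto. rewrite <- L_scal. apply L_ext_in. intros t Ht.
  destruct (Nat.eqb (mdeg K (snd t)) D2) eqn:E0; [|ring]. apply Nat.eqb_eq in E0.
  destruct (leb_k K (snd t) a) eqn:El.
  - rewrite leb_k_spec in El. destruct (mdeg_msub K a (snd t) El) as [Hm1 Hm2].
    assert (Hev : evb K (msub a (snd t)) = true).
    { apply evb_spec. intros i Hi. rewrite evb_spec in Ea. destruct (even_ex _ (Ea i Hi)) as [u Hu].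
      destruct (HE t Ht i Hi) as [v Hv]. unfold msub. rewrite Hu, Hv.
      apply Nat.even_spec. exists (u - v)%nat. lia. }
    unfold wf. rewrite Hev. replace (Nat.eqb (mdeg K (msub a (snd t))) (2 * M)) with true by (symmetry; apply Nat.eqb_eq; lia).
    cbn [andb]. rewrite (pf_msub K a (snd t) Ea (HE t Ht) El).
    pose proof (pf_pos K (msub a (snd t))).
    assert (Hp : prodl (seq 0 K) (fun i => ffr (a i / 2) (snd t i / 2)) <> 0).
    { intros Hz. assert (pf K a = 0) by (rewrite (pf_msub K a (snd t) Ea (HE t Ht) El), Hz; ring).
      pose proof (pf_pos K a). lra. }
    field. split; [exact Hp| lra].
  - assert (Hex : exists j, (j < K)%nat /\ (a j < snd t j)%nat).
    { apply NNPP. intros Hn. assert (leb_k K (snd t) a = true); [|congruence].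
      apply leb_k_spec. intros i Hi. destruct (Nat.le_gt_cases (snd t i) (a i)); auto. exfalso; apply Hn; exists i; auto. }
    destruct Hex as [j [Hj Hlt]].
    rewrite (prodl_has_zero _ _ j); [ring| apply in_seq; lia|].
    apply ffr_zero. rewrite evb_spec in Ea. destruct (even_ex _ (Ea j Hj)) as [u Hu].
    destruct (HE t Ht j Hj) as [v Hv]. unfold mono in *. rewrite Hu, Hv. rewrite !half_double. lia.
Qed.

Definition Labs (P : mpoly) : R := fold_right Rplus 0 (map (fun t => Rabs (fst t)) P).

Lemma Labs_nonneg P : 0 <= Labs P.
Proof. unfold Labs; induction P; simpl; [lra|]. pose proof (Rabs_pos (fst a)). lra. Qed.
Lemma Labs_app P Q : Labs (P ++ Q) = Labs P + Labs Q.
Proof. unfold Labs. rewrite map_app, fold_right_app. induction P; simpl; [lra|]. rewrite IHP. lra. Qed.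
Lemma Labs_pscale c P : Labs (pscale c P) = Rabs c * Labs P.
Proof. unfold Labs, pscale. induction P; simpl; [lra|]. rewrite IHP, Rabs_mult. ring. Qed.

Lemma L_diff_bound f g P T B : 0 <= B -> (forall t, In t P -> Rabs (f (snd t) - g (snd t)) * T <= B) ->
  0 <= T -> Rabs (L f P - L g P) * T <= Labs P * B.
Proof.
  intros HB H HT. induction P as [|t P IH].
  - unfold L, Labs; simpl. rewrite Rminus_diag, Rabs_R0. lra.
  - rewrite !L_cons. unfold Labs; simpl. fold (Labs P).
    replace (fst t * f (snd t) + L f P - (fst t * g (snd t) + L g P)) with
      (fst t * (f (snd t) - g (snd t)) + (L f P - L g P)) by ring.
    assert (H1 : Rabs (fst t) * (Rabs (f (snd t) - g (snd t)) * T) <= Rabs (fst t) * B).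
    { apply Rmult_le_compat_l; [apply Rabs_pos| apply H; left; auto]. }
    assert (IH' := IH ltac:(intros; apply H; right; auto)).
    pose proof (Rabs_triang (fst t * (f (snd t) - g (snd t))) (L f P - L g P)).
    rewrite Rabs_mult in H0. nra.
Qed.

Lemma fold_le_in (l : list nat) (f : nat -> nat) i : In i l -> (f i <= fold_right Nat.add 0%nat (map f l))%nat.
Proof. induction l; simpl; [tauto|]. intros [<-|H]; [lia|]. specialize (IHl H); lia. Qed.

Lemma sqrt_pow_even x v : 0 <= x -> sqrt x ^ (2 * v) = x ^ v.
Proof. intros Hx. rewrite pow_mult, pow2_sqrt; auto. Qed.

Lemma polya_core N X M D (a : mono) rho :
  Ev (N + N) X -> Hom (N + N) (2 * D) X -> (0 < D)%nat -> evb (N + N) a = true ->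
  mdeg (N + N) a = (2 * M + 2 * D)%nat ->
  rho * INR (M + D) ^ D <= peval (N + N) X (fun i => sqrt (INR (a i / 2))) ->
  Labs X * INR D * INR D < rho * INR (M + D) ->
  0 <= L (fun b => if Nat.eqb (mdeg (N + N) b) (2 * D)
                   then prodl (seq 0 (N + N)) (fun i => ffr (a i / 2) (b i / 2)) else 0) X.
Proof.
  set (K := (N + N)%nat). intros HE HH HD Ea Hma Hpsi Herr.
  set (T := INR (M + D)) in *.
  assert (HT : 0 < T) by (unfold T; apply lt_0_INR; lia).
  assert (HDT : INR D <= T) by (unfold T; apply le_INR; lia).
  rewrite evb_spec in Ea.
  assert (Hsum : fold_right Nat.add 0%nat (map (fun i => (a i / 2)%nat) (seq 0 K)) = (M + D)%nat).
  { pose proof (fold_half (seq 0 K) a ltac:(intros i Hi; apply in_seq in Hi; apply Ea; lia)).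
    unfold mdeg in Hma. lia. }
  set (Psi' := L (fun b => if Nat.eqb (mdeg K b) (2 * D) then prodl (seq 0 K) (fun i => INR (a i / 2) ^ (b i / 2)) else 0) X).
  assert (HPsi : peval K X (fun i => sqrt (INR (a i / 2))) = Psi').
  { rewrite peval_L. rewrite (Hom_L K (2 * D) X); auto. 2: apply mon_resp.
    unfold Psi'. apply L_ext_in. intros t Ht. destruct (Nat.eqb (mdeg K (snd t)) (2 * D)); auto.
    unfold mon, rprod. fold (prodl (seq 0 K) (fun i => sqrt (INR (a i / 2)) ^ snd t i)).
    apply prodl_ext_in. intros i Hi. apply in_seq in Hi. destruct (HE t Ht i ltac:(lia)) as [v Hv].
    unfold mono in *. rewrite Hv, half_double. apply sqrt_pow_even, pos_INR. }
  set (Phi := L _ X).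
  assert (Hb : Rabs (Psi' - Phi) * T <= Labs X * (INR D * INR D * T ^ D)).
  { apply L_diff_bound; [| |lra].
    { apply Rmult_le_pos; [apply Rmult_le_pos; apply pos_INR| apply pow_le; lra]. }
    intros t Ht. destruct (Nat.eqb (mdeg K (snd t)) (2 * D)) eqn:E.
    2:{ rewrite Rminus_diag, Rabs_R0, Rmult_0_l. apply Rmult_le_pos; [apply Rmult_le_pos; apply pos_INR| apply pow_le; lra]. }
    apply Nat.eqb_eq in E.
    assert (Hsb : fold_right Nat.add 0%nat (map (fun i => (snd t i / 2)%nat) (seq 0 K)) = D).
    { pose proof (fold_half (seq 0 K) (snd t) ltac:(intros i Hi; apply in_seq in Hi;
         destruct (HE t Ht i ltac:(lia)) as [v Hv]; apply Nat.even_spec; exists v; exact Hv)).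
      unfold mdeg in E. lia. }
    destruct (prodl_close (seq 0 K) (fun i => (a i / 2)%nat) (fun i => (snd t i / 2)%nat) T D HT HDT) as [_ [_ Hc]].
    { intros i Hi. split.
      - unfold T. apply le_INR. rewrite <- Hsum. apply (fold_le_in (seq 0 K) (fun i => (a i / 2)%nat)). auto.
      - rewrite <- Hsb. apply (fold_le_in (seq 0 K) (fun i => (snd t i / 2)%nat)). auto. }
    rewrite Hsb in Hc. exact Hc. }
  assert (Hpos : 0 < T ^ D) by (apply pow_lt; lra).
  assert (Herr2 : Labs X * (INR D * INR D * T ^ D) < rho * T ^ D * T).
  { replace (Labs X * (INR D * INR D * T ^ D)) with (Labs X * INR D * INR D * T ^ D) by ring.
    replace (rho * T ^ D * T) with (rho * T * T ^ D) by ring. apply Rmult_lt_compat_r; auto. }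
  assert (Hfin : (rho * T ^ D - Phi) * T < rho * T ^ D * T).
  { apply Rle_lt_trans with (Rabs (Psi' - Phi) * T).
    - apply Rmult_le_compat_r; [lra|]. rewrite <- HPsi. unfold Rabs. destruct (Rcase_abs _); lra.
    - lra. }
  nra.
Qed.

Definition qv (N i : nat) : mpoly := psub (ppow (pvar i) 2) (ppow (pvar (N + i)) 2).
Definition Av (N d : nat) : mpoly := ppow (psum N (fun i => ppow (qv N i) 2)) (2 * d).
Definition Bv (N d : nat) : mpoly :=
  ppow (psum N (fun i => padd (ppow (pvar i) 4) (ppow (pvar (N + i)) 4))) (2 * d).
Definition Xv (N d : nat) (hq : mpoly) (r : nat) : mpoly :=
  padd (psub hq (pscale (/ INR r) (Av N d))) (pscale (/ (2 * INR r)) (Bv N d)).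

Lemma cert_eq n m p g Rb eta beta r :
  cert n m p g Rb eta beta r =
  pmul (Xv (n + m + 3) (dd n m p g) (psubst (n + m + 3) (hform n m p g Rb eta beta) (qv (n + m + 3))) r)
       (ppow (SS (n + m + 3)) (r * r)).
Proof. reflexivity. Qed.

Lemma Ev_pvar4 k i : Ev k (ppow (pvar i) 4).
Proof.
  intros t Ht j _. simpl in Ht. destruct Ht as [<-|[]]. simpl. exists (2 * (if Nat.eqb j i then 1 else 0))%nat.
  destruct (Nat.eqb j i); lia.
Qed.

Lemma Ev_qv K N i : Ev K (qv N i).
Proof. apply Ev_psub; apply Ev_pvar2. Qed.

Lemma Ev_Xv N d hq r : Ev (N + N) hq -> Ev (N + N) (Xv N d hq r).
Proof.
  intros H. unfold Xv, Av, Bv. apply Ev_padd; [apply Ev_psub|]; auto; apply Ev_pscale; apply Ev_ppow, Ev_psum.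
  - intros i. apply Ev_ppow, Ev_qv.
  - intros i. apply Ev_padd; apply Ev_pvar4.
Qed.

Lemma Hom_qv N i : (i < N)%nat -> Hom (N + N) 2 (qv N i).
Proof. intros Hi. apply Hom_psub; apply Hom_pvarpow; lia. Qed.

Lemma Hom_Xv N d hq r : Hom (N + N) (2 * (4 * d)) hq -> Hom (N + N) (2 * (4 * d)) (Xv N d hq r).
Proof.
  intros H. unfold Xv, Av, Bv. apply Hom_padd; [apply Hom_psub|]; auto; apply Hom_pscale.
  - apply (Hom_eq _ (2 * d * 4)); [lia|]. apply Hom_ppow, Hom_psum. intros i Hi.
    apply (Hom_eq _ (2 * 2)); [lia|]. apply Hom_ppow, Hom_qv; auto.
  - apply (Hom_eq _ (2 * d * 4)); [lia|]. apply Hom_ppow, Hom_psum. intros i Hi.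
    apply Hom_padd; apply Hom_pvarpow; lia.
Qed.

Lemma Labs_Xv N d hq r : (1 <= r)%nat -> Labs (Xv N d hq r) <= Labs hq + Labs (Av N d) + Labs (Bv N d).
Proof.
  intros Hr. unfold Xv, padd, psub. rewrite !Labs_app, !Labs_pscale.
  assert (1 <= INR r) by (apply (le_INR 1); auto).
  pose proof (Labs_nonneg (Av N d)). pose proof (Labs_nonneg (Bv N d)).
  replace (Rabs (-1)) with 1 by (rewrite Rabs_left by lra; ring). rewrite Rabs_right by (apply Rle_ge; left; apply Rinv_0_lt_compat; lra).
  rewrite Rabs_right by (apply Rle_ge; left; apply Rinv_0_lt_compat; lra).
  assert (/ INR r <= 1) by (rewrite <- Rinv_1; apply Rinv_le_contravar; lra).
  assert (/ (2 * INR r) <= 1) by (rewrite <- Rinv_1; apply Rinv_le_contravar; lra).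
  assert (0 <= / INR r) by (left; apply Rinv_0_lt_compat; lra).
  assert (0 <= / (2 * INR r)) by (left; apply Rinv_0_lt_compat; lra).
  nra.
Qed.

Lemma list_const (l : list nat) c : fold_right Rplus 0 (map (fun _ => c) l) = INR (length l) * c.
Proof. induction l; [simpl; ring|]. cbn [map fold_right length]. rewrite IHl, S_INR. ring. Qed.

Lemma rsum_const k c : rsum k (fun _ => c) = INR k * c.
Proof. unfold rsum. rewrite list_const, length_seq. auto. Qed.

Lemma rsum_add k f g : rsum k (fun i => f i + g i) = rsum k f + rsum k g.
Proof. unfold rsum. induction (seq 0 k); simpl; [ring|]. rewrite IHl. ring. Qed.

Lemma cs_lite k x : (0 < k)%nat -> rsum k x ^ 2 / INR k <= rsum k (fun i => x i ^ 2).
Proof.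
  intros Hk. set (S := rsum k x). set (t := S / INR k).
  assert (HK : 0 < INR k) by (apply lt_0_INR; auto).
  assert (H : 0 <= rsum k (fun i => (x i - t) ^ 2)) by (apply rsum_nonneg; intros; apply pow2_ge_0).
  rewrite (rsum_ext_in k _ (fun i => x i ^ 2 + (-2 * t) * x i + t ^ 2)) in H by (intros; ring).
  rewrite !rsum_add, rsum_scal, rsum_const in H. fold S in H.
  unfold t in H. replace (S ^ 2 / INR k) with (2 * (S / INR k) * S - INR k * (S / INR k) ^ 2) by (field; lra).
  lra.
Qed.

Lemma only_if n m p g Rb eta beta : (forall x, inS n m g x -> 0 < peval n p x) ->
  exists r, (1 <= r)%nat /\ has_nonneg_coefs (2 * (n + m + 3)) (cert n m p g Rb eta beta r).
Proof.
  intros Hpos.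
  set (d := dd n m p g). set (N := (n + m + 3)%nat). set (H := hform n m p g Rb eta beta).
  set (hq := psubst N H (qv N)). set (K := (N + N)%nat).
  assert (Hd : (1 <= d)%nat) by apply dd_ge1.
  assert (HHom : Hom N (4 * d) H) by apply Hom_hform.
  destruct (compact_lower N (4 * d) H ltac:(lia) HHom (hform_posdef n m p g Rb eta beta Hpos)) as [c [Hc Hlow]].
  set (C0 := Labs hq + Labs (Av N d) + Labs (Bv N d)).
  assert (HK : 0 < INR K) by (apply lt_0_INR; unfold K, N; lia).
  assert (HKp : 0 < INR K ^ (2 * d)) by (apply pow_lt; auto).
  set (W := 2 * C0 * INR (4 * d) * INR (4 * d) * INR K ^ (2 * d)).
  assert (HC0 : 0 <= C0) by (unfold C0; pose proof (Labs_nonneg hq); pose proof (Labs_nonneg (Av N d)); pose proof (Labs_nonneg (Bv N d)); lra).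
  assert (HW : 0 <= W) by (unfold W; pose proof (pos_INR (4 * d)); apply Rmult_le_pos; [|lra]; nra).
  destruct (INR_unbounded (Rmax 1 (Rmax (/ c) W))) as [r Hr].
  pose proof (Rmax_l 1 (Rmax (/ c) W)). pose proof (Rmax_r 1 (Rmax (/ c) W)).
  pose proof (Rmax_l (/ c) W). pose proof (Rmax_r (/ c) W).
  assert (Hr1 : (1 <= r)%nat). { destruct r; [simpl in Hr; lra| lia]. }
  assert (HrR : 1 <= INR r) by (apply (le_INR 1); auto).
  exists r. split; auto.
  intros a. rewrite cert_eq. fold d N H. fold hq.
  replace (2 * N)%nat with K by (unfold K; lia).
  assert (HEv : Ev K (Xv N d hq r)).
  { apply Ev_Xv. apply Ev_psubst. intros; apply Ev_qv. }
  assert (HHx : Hom K (2 * (4 * d)) (Xv N d hq r)).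
  { apply Hom_Xv. apply Hom_psubst; auto. intros i Hi. apply Hom_qv; auto. }
  destruct (coef_cert_form N (Xv N d hq r) (r * r) (2 * (4 * d)) HEv HHx a) as [Hz0|[Ea [Hma Hform]]].
  { fold K in Hz0. rewrite Hz0. lra. }
  fold K in Ea, Hma, Hform. rewrite Hform.
  apply Rmult_le_pos. { apply Rmult_le_pos; [apply pos_INR| left; apply Rinv_0_lt_compat, pf_pos]. }
  set (rho := / (2 * INR r * INR K ^ (2 * d))).
  apply (polya_core N (Xv N d hq r) (r * r) (4 * d) a rho HEv HHx ltac:(lia) Ea Hma).
  -
    set (gam := fun i => INR (a i / 2)).
    set (sq := fun i => sqrt (gam i)).
    set (TT := INR (r * r + 4 * d)).
    assert (Hsq2 : forall i, sq i ^ 2 = gam i) by (intros; unfold sq; apply pow2_sqrt, pos_INR).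
    set (z := fun i => gam i - gam (N + i)%nat).
    assert (Hq : forall i, (i < N)%nat -> peval K (qv N i) sq = z i).
    { intros i Hi. unfold qv. rewrite peval_psub, !peval_pvar_pow by (unfold K; lia). rewrite !Hsq2. auto. }
    assert (Hhq : peval K hq sq = peval N H z).
    { unfold hq. rewrite peval_psubst. apply peval_ext. auto. }
    assert (HA : peval K (Av N d) sq = rsum N (fun i => z i ^ 2) ^ (2 * d)).
    { unfold Av. rewrite peval_ppow, peval_psum. f_equal. apply rsum_ext_in. intros i Hi.
      rewrite peval_ppow, Hq; auto. }
    assert (HB : peval K (Bv N d) sq = rsum K (fun i => gam i ^ 2) ^ (2 * d)).
    { unfold Bv. rewrite peval_ppow, peval_psum. f_equal. unfold K. rewrite rsum_split, <- rsum_add.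
      apply rsum_ext_in. intros i Hi. rewrite peval_padd, !peval_pvar_pow by lia.
      unfold sq. rewrite !(sqrt_pow_even _ 2) by apply pos_INR. auto. }
    assert (HX : peval K (Xv N d hq r) sq = peval N H z - / INR r * rsum N (fun i => z i ^ 2) ^ (2 * d)
               + / (2 * INR r) * rsum K (fun i => gam i ^ 2) ^ (2 * d)).
    { unfold Xv. rewrite peval_padd, peval_psub, !peval_pscale, Hhq, HA, HB. ring. }
    change (rho * TT ^ (4 * d) <= peval K (Xv N d hq r) sq). rewrite HX.
    assert (Hlz := Hlow z). unfold nrm in Hlz.
    replace (4 * d)%nat with (2 * (2 * d))%nat in Hlz by lia.
    rewrite sqrt_pow_even in Hlz by apply rsum_sq_nonneg.
    assert (Hrc : / INR r <= c).
    { assert (/ c < INR r) by lra. rewrite <- (Rinv_inv c). apply Rinv_le_contravar; [apply Rinv_0_lt_compat; auto| lra]. }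
    assert (HSA : 0 <= rsum N (fun i => z i ^ 2) ^ (2 * d)) by (apply pow_le, rsum_sq_nonneg).
    assert (Hmain : 0 <= peval N H z - / INR r * rsum N (fun i => z i ^ 2) ^ (2 * d)).
    { assert (/ INR r * rsum N (fun i => z i ^ 2) ^ (2 * d) <= c * rsum N (fun i => z i ^ 2) ^ (2 * d)).
      { apply Rmult_le_compat_r; auto. } lra. }
    assert (HTT : rsum K gam = TT).
    { unfold gam, TT. rewrite rsum_INR. f_equal.
      pose proof (fold_half (seq 0 K) a ltac:(intros i Hi; apply in_seq in Hi; rewrite evb_spec in Ea; apply Ea; lia)).
      unfold mdeg in Hma. lia. }
    assert (HQ : TT ^ 2 / INR K <= rsum K (fun i => gam i ^ 2)).
    { rewrite <- HTT. apply cs_lite. unfold K, N; lia. }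
    assert (HTT0 : 0 <= TT) by apply pos_INR.
    assert (HQ2 : (TT ^ 2 / INR K) ^ (2 * d) <= rsum K (fun i => gam i ^ 2) ^ (2 * d)).
    { apply pow_incr. split; auto. apply Rmult_le_pos; [apply pow2_ge_0| left; apply Rinv_0_lt_compat; auto]. }
    assert (HQ3 : (TT ^ 2 / INR K) ^ (2 * d) = TT ^ (4 * d) / INR K ^ (2 * d)).
    { unfold Rdiv. rewrite Rpow_mult_distr, pow_inv, <- pow_mult. replace (2 * (2 * d))%nat with (4 * d)%nat by lia. auto. }
    assert (Hrho : rho * TT ^ (4 * d) = / (2 * INR r) * (TT ^ (4 * d) / INR K ^ (2 * d))).
    { unfold rho. field. split; lra. }
    fold TT. rewrite Hrho.
    assert (0 < / (2 * INR r)) by (apply Rinv_0_lt_compat; lra).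
    assert (/ (2 * INR r) * (TT ^ (4 * d) / INR K ^ (2 * d)) <= / (2 * INR r) * rsum K (fun i => gam i ^ 2) ^ (2 * d)).
    { apply Rmult_le_compat_l; lra. }
    lra.
  -
    assert (HL := Labs_Xv N d hq r Hr1). fold C0 in HL.
    set (TT := INR (r * r + 4 * d)).
    assert (HTT : INR r * INR r < TT).
    { unfold TT. rewrite plus_INR, mult_INR. assert (0 < INR (4 * d)) by (apply lt_0_INR; lia). lra. }
    assert (HWr : W < INR r) by lra.
    assert (Hgoal : C0 * INR (4 * d) * INR (4 * d) * (2 * INR r * INR K ^ (2 * d)) < TT).
    { replace (C0 * INR (4 * d) * INR (4 * d) * (2 * INR r * INR K ^ (2 * d))) with (W * INR r) by (unfold W; ring).
      assert (W * INR r < INR r * INR r) by (apply Rmult_lt_compat_r; lra). lra. }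
    assert (HD4 : 0 <= INR (4 * d)) by apply pos_INR.
    assert (Hle : Labs (Xv N d hq r) * INR (4 * d) * INR (4 * d) <= C0 * INR (4 * d) * INR (4 * d)).
    { apply Rmult_le_compat_r; auto. apply Rmult_le_compat_r; auto. }
    unfold rho. fold TT.
    assert (Hpos2 : 0 < 2 * INR r * INR K ^ (2 * d)) by (apply Rmult_lt_0_compat; lra).
    assert (C0 * INR (4 * d) * INR (4 * d) < / (2 * INR r * INR K ^ (2 * d)) * TT).
    { apply (Rmult_lt_reg_r (2 * INR r * INR K ^ (2 * d))); auto.
      replace (/ (2 * INR r * INR K ^ (2 * d)) * TT * (2 * INR r * INR K ^ (2 * d))) with TT by (field; lra). lra. }
    lra.
Qed.

Lemma root_exists (u : R) (e : nat) : 0 <= u -> (0 < e)%nat -> exists s, s ^ e = u.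
Proof.
  intros Hu He. destruct (Req_dec u 0) as [->|Hne].
  - exists 0. apply pow_i; auto.
  - exists (Rpower u (/ INR e)). assert (0 < INR e) by (apply lt_0_INR; auto).
    rewrite <- Rpower_pow by (unfold Rpower; apply exp_pos).
    rewrite Rpower_mult. replace (/ INR e * INR e) with 1 by (field; lra). apply Rpower_1. lra.
Qed.

Lemma rsum_S m f : rsum (S m) f = f 0%nat + rsum m (fun j => f (S j)).
Proof. unfold rsum. simpl. f_equal. rewrite <- seq_shift, map_map. auto. Qed.

Lemma mon_nonneg k x b : (forall i, 0 <= x i) -> 0 <= mon k x b.
Proof. intros H. unfold mon, rprod. induction (seq 0 k); simpl; [lra|]. apply Rmult_le_pos; auto. apply pow_le; auto. Qed.

Lemma if_dir n m p g Rb eta beta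
    (Hball : forall x : nat -> R, inS n m g x -> rsum n (fun i => x i ^ 2) <= Rb)
    (Heta : forall x : nat -> R, inS n m g x ->
              forall j, (j < m)%nat -> peval n (g j) x <= eta j)
    (Hbeta : forall x : nat -> R, inS n m g x -> - peval n p x <= beta) r :
  (1 <= r)%nat -> has_nonneg_coefs (2 * (n + m + 3)) (cert n m p g Rb eta beta r) ->
  forall x, inS n m g x -> 0 < peval n p x.
Proof.
  intros Hr Hcoef x Hx. apply Rnot_le_lt. intros Hp.
  set (d := dd n m p g). set (N := (n + m + 3)%nat). set (yi := (n + m + 2)%nat).
  assert (Hd : (1 <= d)%nat) by apply dd_ge1.
  set (X0 := rsum n (fun i => x i ^ 2) + (- peval n p x + rsum m (fun j => peval n (g j) x))).
  assert (HX0 : 0 <= X0).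
  { unfold X0. pose proof (rsum_sq_nonneg n x). assert (0 <= rsum m (fun j => peval n (g j) x)).
    { apply rsum_nonneg. intros j Hj. apply Hx; auto. } lra. }
  assert (HXc : X0 <= cc m Rb eta beta).
  { unfold X0, cc. pose proof (Hball x Hx). pose proof (Hbeta x Hx).
    assert (rsum m (fun j => peval n (g j) x) <= rsum m eta).
    { unfold rsum. assert (Hl : forall j, In j (seq 0 m) -> peval n (g j) x <= eta j).
      { intros j Hj. apply in_seq in Hj. apply Heta; auto; lia. }
      induction (seq 0 m); simpl; [lra|]. assert (peval n (g a) x <= eta a) by (apply Hl; left; auto).
      assert (fold_right Rplus 0 (map (fun j => peval n (g j) x) l) <= fold_right Rplus 0 (map eta l)) by (apply IHl; intros; apply Hl; right; auto). lra. }
    lra. }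
  destruct (root_exists (cc m Rb eta beta ^ d - X0 ^ d) (2 * d)) as [s Hs].
  { assert (X0 ^ d <= cc m Rb eta beta ^ d) by (apply pow_incr; lra). lra. }
  { lia. }
  set (z := fun i => if Nat.ltb i n then x i else if Nat.eqb i n then sqrt (- peval n p x)
                     else if Nat.ltb i (n + m + 1) then sqrt (peval n (g (i - n - 1)%nat) x)
                     else if Nat.eqb i (n + m + 1) then s else 1).
  assert (Hzx : forall i, (i < n)%nat -> z i = x i).
  { intros i Hi. unfold z. destruct (Nat.ltb i n) eqn:E; auto. apply Nat.ltb_ge in E; lia. }
  assert (Hzy : z yi = 1).
  { unfold z, yi. destruct (Nat.ltb _ n) eqn:E1; [apply Nat.ltb_lt in E1; lia|].
    destruct (Nat.eqb _ n) eqn:E2; [apply Nat.eqb_eq in E2; lia|].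
    destruct (Nat.ltb _ (n + m + 1)) eqn:E3; [apply Nat.ltb_lt in E3; lia|].
    destruct (Nat.eqb _ (n + m + 1)) eqn:E4; [apply Nat.eqb_eq in E4; lia|]. auto. }
  assert (Hz0 : z n ^ 2 = - peval n p x).
  { unfold z. destruct (Nat.ltb n n) eqn:E1; [apply Nat.ltb_lt in E1; lia|]. rewrite Nat.eqb_refl.
    apply pow2_sqrt. lra. }
  assert (Hzg : forall j, (j < m)%nat -> z (n + S j)%nat ^ 2 = peval n (g j) x).
  { intros j Hj. unfold z. destruct (Nat.ltb _ n) eqn:E1; [apply Nat.ltb_lt in E1; lia|].
    destruct (Nat.eqb _ n) eqn:E2; [apply Nat.eqb_eq in E2; lia|].
    destruct (Nat.ltb _ (n + m + 1)) eqn:E3; [|apply Nat.ltb_ge in E3; lia].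
    replace (n + S j - n - 1)%nat with j by lia. apply pow2_sqrt. apply Hx; auto. }
  assert (Hzs : z (n + S m)%nat = s).
  { unfold z. destruct (Nat.ltb _ n) eqn:E1; [apply Nat.ltb_lt in E1; lia|].
    destruct (Nat.eqb _ n) eqn:E2; [apply Nat.eqb_eq in E2; lia|].
    destruct (Nat.ltb _ (n + m + 1)) eqn:E3; [apply Nat.ltb_lt in E3; lia|].
    destruct (Nat.eqb _ (n + m + 1)) eqn:E4; [auto|apply Nat.eqb_neq in E4; lia]. }
  assert (Hh : peval N (hform n m p g Rb eta beta) z = 0).
  { unfold N. rewrite peval_hform. fold d. fold yi. fold N.
    rewrite !peval_homog_1 by (auto; unfold yi, N; lia). rewrite Hzy, !pow1.
    rewrite (peval_ext n p z x Hzx), Hz0.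
    rewrite (rsum_ext_in m _ (fun _ => 0)).
    2:{ intros j Hj. rewrite peval_homog_1 by (auto; unfold yi, N; lia). rewrite (peval_ext n (g j) z x Hzx), Hzg by auto. ring. }
    rewrite (rsum_ext_in n _ (fun i => x i ^ 2)) by (intros; rewrite Hzx; auto).
    rewrite rsum_S, Nat.add_0_r, Hz0.
    rewrite (rsum_ext_in m (fun j => z (n + S j)%nat ^ 2) (fun j => peval n (g j) x)) by (intros; apply Hzg; auto).
    fold X0. rewrite Hzs, Hs, rsum_const. ring. }
  set (k := (2 * N)%nat).
  set (w := fun j => if Nat.ltb j N then sqrt (Rmax (z j) 0) else sqrt (Rmax (- z (j - N)%nat) 0)).
  assert (Hw0 : forall j, 0 <= w j) by (intros j; unfold w; destruct (Nat.ltb j N); apply sqrt_pos).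
  assert (Hnn : 0 <= peval k (cert n m p g Rb eta beta r) w).
  { rewrite peval_L. apply (L_nonneg k); [apply mon_resp| exact Hcoef| intros; apply mon_nonneg; auto]. }
  assert (HwA : forall i, (i < N)%nat -> w i = sqrt (Rmax (z i) 0)).
  { intros i Hi. unfold w. destruct (Nat.ltb i N) eqn:E; auto. apply Nat.ltb_ge in E; lia. }
  assert (HwB : forall i, (i < N)%nat -> w (N + i)%nat = sqrt (Rmax (- z i) 0)).
  { intros i Hi. unfold w. destruct (Nat.ltb (N + i) N) eqn:E; [apply Nat.ltb_lt in E; lia|].
    replace (N + i - N)%nat with i by lia. auto. }
  assert (Hmx : forall u, Rmax u 0 - Rmax (- u) 0 = u /\ Rmax u 0 ^ 2 + Rmax (- u) 0 ^ 2 = u ^ 2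
                          /\ 0 <= Rmax u 0 /\ 0 <= Rmax (- u) 0).
  { intros u. unfold Rmax. destruct (Rle_dec u 0), (Rle_dec (- u) 0); repeat split; try lra; try ring; nra. }
  assert (Hq : forall i, (i < N)%nat -> peval k (qv N i) w = z i).
  { intros i Hi. unfold qv. rewrite peval_psub, !peval_pvar_pow by (unfold k; lia).
    rewrite HwA, HwB by auto. destruct (Hmx (z i)) as [H1 [_ [H3 H4]]]. rewrite !pow2_sqrt by auto. auto. }
  assert (SAdef : peval k (Av N d) w = rsum N (fun i => z i ^ 2) ^ (2 * d)).
  { unfold Av. rewrite peval_ppow, peval_psum. f_equal. apply rsum_ext_in. intros i Hi. rewrite peval_ppow, Hq; auto. }
  assert (SBdef : peval k (Bv N d) w = rsum N (fun i => z i ^ 2) ^ (2 * d)).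
  { unfold Bv. rewrite peval_ppow, peval_psum. f_equal. apply rsum_ext_in. intros i Hi.
    rewrite peval_padd, !peval_pvar_pow by (unfold k; lia). rewrite HwA, HwB by auto.
    destruct (Hmx (z i)) as [_ [H2 [H3 H4]]]. rewrite !(sqrt_pow_even _ 2) by auto. auto. }
  assert (Hhq : peval k (psubst N (hform n m p g Rb eta beta) (qv N)) w = 0).
  { rewrite peval_psubst. rewrite (peval_ext N _ _ z) by auto. auto. }
  assert (HSA : 0 < rsum N (fun i => z i ^ 2)).
  { assert (z yi ^ 2 <= rsum N (fun i => z i ^ 2)) by (apply (rsum_ge_term N (fun i => z i ^ 2) yi); [intros; apply pow2_ge_0| unfold yi, N; lia]).
    rewrite Hzy in H. lra. }
  assert (HSS : 0 < peval k (SS N) w).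
  { unfold SS. rewrite peval_padd, !peval_psum.
    rewrite (rsum_ext_in N _ (fun i => w i ^ 2)) by (intros; apply peval_pvar_pow; unfold k; lia).
    rewrite (rsum_ext_in N (fun i => peval k (ppow (pvar (N + i)) 2) w) (fun i => w (N + i)%nat ^ 2)) by (intros; apply peval_pvar_pow; unfold k; lia).
    assert (w yi ^ 2 <= rsum N (fun i => w i ^ 2)) by (apply (rsum_ge_term N (fun i => w i ^ 2) yi); [intros; apply pow2_ge_0| unfold yi, N; lia]).
    assert (0 <= rsum N (fun i => w (N + i)%nat ^ 2)) by (apply rsum_nonneg; intros; apply pow2_ge_0).
    rewrite HwA in H by (unfold yi, N; lia). rewrite Hzy in H. rewrite pow2_sqrt in H by (unfold Rmax; destruct (Rle_dec 1 0); lra).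
    unfold Rmax in H. destruct (Rle_dec 1 0); lra. }
  rewrite cert_eq in Hnn. fold d N in Hnn. fold k in Hnn.
  rewrite peval_pmul, peval_ppow in Hnn. unfold Xv in Hnn.
  rewrite peval_padd, peval_psub, !peval_pscale, Hhq, SAdef, SBdef in Hnn.
  assert (HrR : 1 <= INR r) by (apply (le_INR 1); auto).
  assert (Hneg : 0 - / INR r * rsum N (fun i => z i ^ 2) ^ (2 * d) + / (2 * INR r) * rsum N (fun i => z i ^ 2) ^ (2 * d) < 0).
  { assert (0 < rsum N (fun i => z i ^ 2) ^ (2 * d)) by (apply pow_lt; auto).
    replace (0 - / INR r * rsum N (fun i => z i ^ 2) ^ (2 * d) + / (2 * INR r) * rsum N (fun i => z i ^ 2) ^ (2 * d))
      with (- (/ (2 * INR r)) * rsum N (fun i => z i ^ 2) ^ (2 * d)) by (field; lra).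
    assert (0 < / (2 * INR r)) by (apply Rinv_0_lt_compat; lra). nra. }
  assert (0 < peval k (SS N) w ^ (r * r)) by (apply pow_lt; auto).
  nra.
Qed.


Theorem corollary4p4 (n m : nat) (p : mpoly) (g : nat -> mpoly)
    (Rb : R) (eta : nat -> R) (beta : R)
    (HR : 0 < Rb)
    (Hball : forall x : nat -> R, inS n m g x -> rsum n (fun i => x i ^ 2) <= Rb)
    (Heta : forall x : nat -> R, inS n m g x ->
              forall j, (j < m)%nat -> peval n (g j) x <= eta j)
    (Hbeta : forall x : nat -> R, inS n m g x -> - peval n p x <= beta) :
  (forall x : nat -> R, inS n m g x -> 0 < peval n p x) <->
  exists r : nat, (1 <= r)%nat /\
    has_nonneg_coefs (2 * (n + m + 3)) (cert n m p g Rb eta beta r).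
Proof.
  split.
  - apply only_if.
  - intros [r [Hr Hc]]. exact (if_dir n m p g Rb eta beta Hball Heta Hbeta r Hr Hc).
Qed.
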